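(* Let $\Psi,\Lambda,\Upsilon$ and $\delta$ be as in the context, put $\bar\Lambda=\Lambda(\bar U,\vec0,0,0)$, and let $\{\bar U^\varepsilon\}\subseteq\mathbb R^n$ with $\bar U^\varepsilon\to\bar U$ as $\varepsilon\to0^+$. If $\delta$ is sufficiently small, there exist constants $c_V,\theta,c_W\in(0,1)$ independent of $\varepsilon$ such that for every sufficiently small $\varepsilon>0$ and every $\bar W_{cs}\in\mathbb R^k$ with $|\bar W_{cs}|\le\theta\delta$, the system $$V^\varepsilon(\zeta)=\bar U^\varepsilon+\int_{\delta/\varepsilon}^{\zeta}\Psi\big(V^\varepsilon(y),W^\varepsilon_{cs}(y),\varepsilon y,\varepsilon\big)W^\varepsilon_{cs}(y)\,dy,$$ $$W^\varepsilon_{cs}(\zeta)=e^{\bar\Lambda\zeta-\varepsilon\zeta^2I_k/2}\bar W_{cs}+\int_0^\zeta e^{\bar\Lambda(\zeta-y)-\varepsilon\zeta^2I_k/2+\varepsilon y^2I_k/2}\Big\{\big[\Lambda(\cdot)-\bar\Lambda\big]-\varepsilon y\big[\Upsilon(\cdot)-I_k\big]\Big\}W^\varepsilon_{cs}(y)\,dy,$$ where $(\cdot)=\big(V^\varepsilon(y),W^\varepsilon_{cs}(y),\varepsilon y,\varepsilon\big)$, admits a unique continuous solution $(V^\varepsilon,W^\varepsilon_{cs})$ on $[0,\delta/\varepsilon]$ satisfying, for every $\zeta\in[0,\delta/\varepsilon]$, $$|V^\varepsilon(\zeta)-\bar U|\le c_V\delta,\qquad |W^\varepsilon_{cs}(\zeta)|\le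 c_W e^{-c\zeta/2}\delta.$$
   Context: $A:\mathbb R^n\to\mathbb R^{n\times n}$ smooth and strictly hyperbolic with eigenvalues satisfying $\lambda_1(U)<\dots<\lambda_k(U)<-c<0<c<\lambda_{k+1}(U)<\dots<\lambda_n(U)$ for all $U$ (some $1\le k\le n-1$, $c>0$). $\bar U\in\mathbb R^n$ is fixed. $\Psi(V,W_{cs},\xi,\varepsilon)\in\mathbb R^{n\times k}$, $\Lambda(V,W_{cs},\xi,\varepsilon)\in\mathbb R^{k\times k}$, $\Upsilon(V,W_{cs},\xi,\varepsilon)\in\mathbb R^{k\times k}$ are smooth functions defined for $|V-\bar U|\le\delta$, $|W_{cs}|\le\delta$, $|\xi|\le\delta$, $|\varepsilon|\le\delta$, with $\Lambda(\bar U,\vec0,0,0)=\mathrm{Diag}(\lambda_1(\bar U),\dots,\lambda_k(\bar U))$ and $\Upsilon(\bar U,\vec0,0,0)=I_k$; they are the coefficients of the reduction $V'=\Psi W_{cs}$, $W_{cs}'=(\Lambda-\xi\Upsilon)W_{cs}$, $\xi'=\varepsilon$, $\varepsilon'=0$ of the self-similar viscous profile system to a center-stable manifold about $(\bar U,\vec0,0,0)$ (Lemma 3.1). *)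

(* Defs.v *)
From Stdlib Require Import Reals Lra ClassicalEpsilon.
From Stdlib Require Import Factorial.
From Stdlib Require Fin.
Open Scope R_scope.

Definition vec (N : nat) := Fin.t N -> R.
Definition mat (N P : nat) := Fin.t N -> Fin.t P -> R.

Fixpoint fsum (N : nat) : (Fin.t N -> R) -> R :=
  match N return (Fin.t N -> R) -> R with
  | O => fun _ => 0
  | S N' => fun f => f Fin.F1 + fsum N' (fun i => f (Fin.FS i))
  end.

Definition vnorm {N : nat} (v : vec N) : R := sqrt (fsum N (fun i => v i ^ 2)).
Definition vsub {N : nat} (u v : vec N) : vec N := fun i => u i - v i.
Definition vzero (N : nat) : vec N := fun _ => 0.

Definition mv {N P : nat} (M : mat N P) (w : vec P) : vec N :=
  fun i => fsum P (fun j => M i j * w j).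
Definition mmul {N P Q : nat} (M : mat N P) (M' : mat P Q) : mat N Q :=
  fun i j => fsum P (fun l => M i l * M' l j).
Definition mid (N : nat) : mat N N := fun i j => if Fin.eq_dec i j then 1 else 0.
Definition madd {N P : nat} (M M' : mat N P) : mat N P := fun i j => M i j + M' i j.
Definition msub {N P : nat} (M M' : mat N P) : mat N P := fun i j => M i j - M' i j.
Definition mscal {N P : nat} (a : R) (M : mat N P) : mat N P := fun i j => a * M i j.
Definition mdiag {N : nat} (d : Fin.t N -> R) : mat N N :=
  fun i j => if Fin.eq_dec i j then d i else 0.

Fixpoint mpow {N : nat} (M : mat N N) (q : nat) : mat N N :=
  match q with O => mid N | S q' => mmul M (mpow M q') end.

Definition mexp {N : nat} (M : mat N N) : mat N N :=
  fun i j => epsilon (inhabits 0)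
    (fun l => Un_cv (fun p => sum_f_R0 (fun q => mpow M q i j / INR (fact q)) p) l).

Definition upd {N : nat} (x : vec N) (j : Fin.t N) (a : R) : vec N :=
  fun i => if Fin.eq_dec i j then a else x i.

Definition cont_on {N : nat} (D : vec N -> Prop) (f : vec N -> R) : Prop :=
  forall x, D x -> forall e, 0 < e -> exists d, 0 < d /\
    forall y, D y -> vnorm (vsub y x) < d -> Rabs (f y - f x) < e.

(* C^r on D (D intended open): continuous, and all first partial derivatives
   exist on D and are C^(r-1) on D *)
Fixpoint Ck {N : nat} (r : nat) (D : vec N -> Prop) (f : vec N -> R) : Prop :=
  match r with
  | O => cont_on D f
  | S r' => cont_on D f /\
      forall j : Fin.t N, exists g : vec N -> R,
        (forall x, D x -> derivable_pt_lim (fun t => f (upd x j (x j + t))) 0 (g x))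
        /\ Ck r' D g
  end.

Definition smooth_on {N : nat} (D : vec N -> Prop) (f : vec N -> R) : Prop :=
  forall r, Ck r D f.

(* splitting a point of R^(n+k+2) into (V, W, xi, eps) *)
Definition pV {n k : nat} (x : vec (n + k + 2)) : vec n := fun i => x (Fin.L 2 (Fin.L k i)).
Definition pW {n k : nat} (x : vec (n + k + 2)) : vec k := fun i => x (Fin.L 2 (Fin.R n i)).
Definition pxi {n k : nat} (x : vec (n + k + 2)) : R := x (Fin.R (n + k) Fin.F1).
Definition peps {n k : nat} (x : vec (n + k + 2)) : R := x (Fin.R (n + k) (Fin.FS Fin.F1)).

Definition box {n k : nat} (Ubar : vec n) (d0 : R) (x : vec (n + k + 2)) : Prop :=
  vnorm (vsub (pV x) Ubar) < d0 /\ vnorm (pW x) < d0 /\ Rabs (pxi x) < d0 /\ Rabs (peps x) < d0.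

Definition smooth_coef {n k P Q : nat} (D : vec (n + k + 2) -> Prop)
    (F : vec n -> vec k -> R -> R -> mat P Q) : Prop :=
  forall i j, smooth_on D (fun x => F (pV x) (pW x) (pxi x) (peps x) i j).

Definition RInt_eq (f : R -> R) (a b I : R) : Prop :=
  exists pr : Riemann_integrable f a b, RiemannInt pr = I.

Definition cont_int (a b : R) (f : R -> R) : Prop :=
  forall x, a <= x <= b -> forall e, 0 < e -> exists d, 0 < d /\
    forall y, a <= y <= b -> Rabs (y - x) < d -> Rabs (f y - f x) < e.

Definition good_solution {n k : nat}
    (Psi : vec n -> vec k -> R -> R -> mat n k)
    (Lam Ups : vec n -> vec k -> R -> R -> mat k k)
    (Ubar Ueps : vec n) (Wbar : vec k) (c delta eps cV cW : R)
    (V : R -> vec n) (W : R -> vec k) : Prop :=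
  let T := delta / eps in
  let Lb := Lam Ubar (vzero k) 0 0 in
  (forall i, cont_int 0 T (fun y => V y i)) /\
  (forall i, cont_int 0 T (fun y => W y i)) /\
  (forall z, 0 <= z <= T -> forall i : Fin.t n, exists I,
     RInt_eq (fun y => mv (Psi (V y) (W y) (eps * y) eps) (W y) i) T z I /\
     V z i = Ueps i + I) /\
  (forall z, 0 <= z <= T -> forall i : Fin.t k, exists I,
     RInt_eq (fun y =>
        mv (mexp (madd (mscal (z - y) Lb)
                       (mscal (- (eps * z ^ 2 / 2) + eps * y ^ 2 / 2) (mid k))))
           (mv (msub (msub (Lam (V y) (W y) (eps * y) eps) Lb)
                     (mscal (eps * y) (msub (Ups (V y) (W y) (eps * y) eps) (mid k))))
               (W y)) i) 0 z I /\
     W z i = mv (mexp (msub (mscal z Lb) (mscal (eps * z ^ 2 / 2) (mid k)))) Wbar i + I) /\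
  (forall z, 0 <= z <= T ->
     vnorm (vsub (V z) Ubar) <= cV * delta /\
     vnorm (W z) <= cW * exp (- c * z / 2) * delta).

(* Main.v *)
Require Import Defs.
From Stdlib Require Import Reals.
From Stdlib Require Fin.
From Coquelicot Require Import Coquelicot.
From Stdlib Require Import Reals.
From Stdlib Require Import Lra Lia List FunctionalExtensionality ClassicalEpsilon.
Open Scope R_scope.

Lemma fsum_ext N (f g : Fin.t N -> R) : (forall i, f i = g i) -> fsum N f = fsum N g.
Proof. induction N; simpl; intros H; [reflexivity|]. rewrite H, (IHN (fun i => f (Fin.FS i)) (fun i => g (Fin.FS i))); auto. Qed.

Lemma fsum_plus N (f g : Fin.t N -> R) : fsum N (fun i => f i + g i) = fsum N f + fsum N g.
Proof. induction N; simpl; [lra|]. rewrite (IHN (fun i => f (Fin.FS i)) (fun i => g (Fin.FS i))); lra. Qed.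

Lemma fsum_scal N (c : R) (f : Fin.t N -> R) : fsum N (fun i => c * f i) = c * fsum N f.
Proof. induction N; simpl; [lra|]. rewrite (IHN (fun i => f (Fin.FS i))); lra. Qed.

Lemma fsum_le N (f g : Fin.t N -> R) : (forall i, f i <= g i) -> fsum N f <= fsum N g.
Proof. induction N; simpl; intros H; [lra|]. pose proof (H Fin.F1). pose proof (IHN (fun i => f (Fin.FS i)) (fun i => g (Fin.FS i)) (fun i => H _)). lra. Qed.

Lemma fsum_zero N : fsum N (fun _ => 0) = 0.
Proof. induction N; simpl; [lra|]. rewrite IHN; lra. Qed.

Lemma fsum_const N c : fsum N (fun _ => c) = INR N * c.
Proof. induction N; simpl fsum; [simpl; lra|]. rewrite IHN, S_INR; lra. Qed.

Lemma fsum_nonneg N (f : Fin.t N -> R) : (forall i, 0 <= f i) -> 0 <= fsum N f.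
Proof. intros H. rewrite <- (fsum_zero N). apply fsum_le; auto. Qed.

Lemma fsum_abs N (f : Fin.t N -> R) : Rabs (fsum N f) <= fsum N (fun i => Rabs (f i)).
Proof. induction N; simpl; [rewrite Rabs_R0; lra|].
  eapply Rle_trans; [apply Rabs_triang|]. pose proof (IHN (fun i => f (Fin.FS i))). lra. Qed.

Lemma fsum_term N (f : Fin.t N -> R) j : (forall i, 0 <= f i) -> f j <= fsum N f.
Proof. induction N; intros H; [inversion j|].
  revert f H. apply (Fin.caseS' j); simpl; intros.
  - pose proof (fsum_nonneg N (fun i => f (Fin.FS i)) (fun i => H _)). lra.
  - pose proof (IHN (fun i => f (Fin.FS i)) p (fun i => H _)). pose proof (H Fin.F1). lra. Qed.

Lemma fsum_delta N (b : Fin.t N -> R) i :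
  fsum N (fun j => if Fin.eq_dec i j then b j else 0) = b i.
Proof. induction N; [inversion i|].
  revert b. apply (Fin.caseS' i); simpl; intros.
  - rewrite fsum_zero. destruct (Fin.eq_dec Fin.F1 Fin.F1); [lra|congruence].
  - rewrite <- (IHN (fun j => b (Fin.FS j)) p).
    rewrite Rplus_0_l. apply fsum_ext.
    intros j. destruct (Fin.eq_dec (Fin.FS p) (Fin.FS j)) as [E|E]; destruct (Fin.eq_dec p j) as [E'|E']; auto.
    + apply Fin.FS_inj in E. congruence.
    + subst. congruence.
Qed.

Lemma fsum_delta' N (b : Fin.t N -> R) i :
  fsum N (fun j => if Fin.eq_dec j i then b j else 0) = b i.
Proof. rewrite <- (fsum_delta N b i). apply fsum_ext. intros j.
  destruct (Fin.eq_dec j i), (Fin.eq_dec i j); subst; auto; congruence. Qed.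

Lemma fsum_LR N M (f : Fin.t (N + M) -> R) :
  fsum (N + M) f = fsum N (fun i => f (Fin.L M i)) + fsum M (fun j => f (Fin.R N j)).
Proof. induction N; simpl; [rewrite Rplus_0_l; reflexivity|]. rewrite (IHN (fun i => f (Fin.FS i))). simpl. rewrite Rplus_assoc; reflexivity. Qed.

Definition n1 {N} (v : vec N) := fsum N (fun i => Rabs (v i)).

Lemma n1_nonneg N (v : vec N) : 0 <= n1 v.
Proof. apply fsum_nonneg. intros; apply Rabs_pos. Qed.

Lemma abs_le_n1 N (v : vec N) i : Rabs (v i) <= n1 v.
Proof. apply (fsum_term N (fun i => Rabs (v i))). intros; apply Rabs_pos. Qed.

Lemma sumsq_le N (v : vec N) : fsum N (fun i => v i ^ 2) <= (n1 v) ^ 2.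
Proof. unfold n1. induction N; [simpl; lra|]. cbn [fsum].
  pose proof (IHN (fun i => v (Fin.FS i))).
  pose proof (fsum_nonneg N (fun i => Rabs (v (Fin.FS i))) (fun i => Rabs_pos _)).
  pose proof (Rabs_pos (v Fin.F1)).
  assert (v Fin.F1 ^ 2 = Rabs (v Fin.F1) ^ 2) by (rewrite pow2_abs; auto).
  set (a := Rabs (v Fin.F1)) in *. set (S := fsum N (fun i => Rabs (v (Fin.FS i)))) in *.
  set (S' := fsum N (fun i => v (Fin.FS i) ^ 2)) in *.
  assert (0 <= a * S) by (apply Rmult_le_pos; auto).
  rewrite H2. nra. Qed.

Lemma vnorm_le_n1 N (v : vec N) : vnorm v <= n1 v.
Proof. unfold vnorm. rewrite <- (sqrt_Rsqr (n1 v)) by apply n1_nonneg.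
  apply sqrt_le_1_alt. unfold Rsqr. replace (n1 v * n1 v) with (n1 v ^ 2) by ring. apply sumsq_le. Qed.

Lemma abs_le_vnorm N (v : vec N) i : Rabs (v i) <= vnorm v.
Proof. unfold vnorm. rewrite <- (sqrt_Rsqr (Rabs (v i))) by apply Rabs_pos.
  apply sqrt_le_1_alt. unfold Rsqr. rewrite <- Rabs_mult, Rabs_right by (apply Rle_ge, Rle_0_sqr).
  replace (v i * v i) with (v i ^ 2) by ring.
  apply (fsum_term N (fun i => v i ^ 2)). intros; apply pow2_ge_0. Qed.

Lemma n1_le_vnorm N (v : vec N) : n1 v <= INR N * vnorm v.
Proof. unfold n1. rewrite <- fsum_const. apply fsum_le. intros; apply abs_le_vnorm. Qed.

Lemma mv_bound P Q (M : mat P Q) w i B : (forall j, Rabs (M i j) <= B) ->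
  Rabs (mv M w i) <= B * n1 w.
Proof. intros H. unfold mv, n1. eapply Rle_trans; [apply fsum_abs|].
  rewrite <- fsum_scal. apply fsum_le. intros j. rewrite Rabs_mult.
  apply Rmult_le_compat_r; auto. apply Rabs_pos. Qed.


Lemma upd_same N (x : vec N) j a : upd x j a j = a.
Proof. unfold upd. destruct (Fin.eq_dec j j); congruence. Qed.

Lemma upd_other N (x : vec N) j a i : i <> j -> upd x j a i = x i.
Proof. unfold upd. destruct (Fin.eq_dec i j); congruence. Qed.

Lemma upd_upd N (x : vec N) j a b : upd (upd x j a) j b = upd x j b.
Proof. apply functional_extensionality; intros i. unfold upd. destruct (Fin.eq_dec i j); auto. Qed.

Lemma upd_id N (x : vec N) j : upd x j (x j) = x.
Proof. apply functional_extensionality; intros i. unfold upd. destruct (Fin.eq_dec i j); subst; auto. Qed.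

Lemma deriv_shift (phi : R -> R) t l :
  derivable_pt_lim (fun s => phi (t + s)) 0 l -> derivable_pt_lim phi t l.
Proof. unfold derivable_pt_lim. intros H eps He. destruct (H eps He) as [d Hd].
  exists d. intros h Hh Hhd. specialize (Hd h Hh Hhd).
  replace (t + (0 + h)) with (t + h) in Hd by ring. replace (t + 0) with t in Hd by ring. auto. Qed.

Definition btw {N} (x y z : vec N) := forall i, Rmin (x i) (y i) <= z i <= Rmax (x i) (y i).

Lemma btw_n1 N (x y z x0 : vec N) : btw x y z ->
  n1 (vsub z x0) <= n1 (vsub x x0) + n1 (vsub y x0).
Proof. intros H. unfold n1. rewrite <- fsum_plus. apply fsum_le. intros i.
  specialize (H i). unfold vsub. unfold Rmin, Rmax in H.
  destruct (Rle_dec (x i) (y i)); unfold Rabs; repeat destruct Rcase_abs; lra. Qed.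

Section Lip.
Variable N : nat.
Variable f : vec N -> R.
Variable x0 : vec N.
Variables R0 L : R.
Hypothesis HD : forall j, exists g : vec N -> R,
  (forall z, n1 (vsub z x0) <= R0 -> derivable_pt_lim (fun t => f (upd z j (z j + t))) 0 (g z)) /\
  (forall z, n1 (vsub z x0) <= R0 -> Rabs (g z) <= L).

Lemma lip_step (x y h : vec N) j : n1 (vsub x x0) + n1 (vsub y x0) <= R0 -> btw x y h ->
  Rabs (f (upd h j (y j)) - f h) <= L * Rabs (y j - x j).
Proof. intros HR Hb. destruct (HD j) as [g [Hg1 Hg2]].
  set (phi := fun t => f (upd h j (h j + t))).
  assert (Hbz : forall c, Rmin 0 (y j - h j) <= c <= Rmax 0 (y j - h j) -> btw x y (upd h j (h j + c))).
  { intros c Hc i. destruct (Fin.eq_dec i j) as [E|E].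
    - subst. rewrite upd_same. specialize (Hb j). unfold Rmin, Rmax in *.
      destruct (Rle_dec 0 (y j - h j)); destruct (Rle_dec (x j) (y j)); lra.
    - rewrite upd_other by auto. apply Hb. }
  destruct (MVT_abs phi (fun t => g (upd h j (h j + t))) 0 (y j - h j)) as [c [Hc1 Hc2]].
  { intros c Hc. apply deriv_shift. unfold phi.
    assert (E : (fun s => f (upd h j (h j + (c + s)))) =
                (fun s => f (upd (upd h j (h j + c)) j (upd h j (h j + c) j + s)))).
    { apply functional_extensionality; intros s. rewrite upd_upd, upd_same. f_equal. f_equal. ring. }
    rewrite E. apply Hg1. eapply Rle_trans; [apply (btw_n1 _ x y)|]; auto. }
  unfold phi in Hc1. replace (h j + (y j - h j)) with (y j) in Hc1 by ring.
  replace (h j + 0) with (h j) in Hc1 by ring. rewrite upd_id in Hc1. rewrite Hc1.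
  apply Rmult_le_compat.
  - apply Rabs_pos.
  - apply Rabs_pos.
  - apply Hg2. eapply Rle_trans; [apply (btw_n1 _ x y)|]; auto.
  - specialize (Hb j). unfold Rmin, Rmax in Hb. rewrite Rminus_0_r.
    destruct (Rle_dec (x j) (y j)); unfold Rabs; repeat destruct Rcase_abs; lra.
Qed.

Fixpoint allfin (M : nat) : list (Fin.t M) :=
  match M with O => nil | S M' => Fin.F1 :: map Fin.FS (allfin M') end.

Lemma allfin_in M (i : Fin.t M) : In i (allfin M).
Proof. induction M; [inversion i|]. apply (Fin.caseS' i); simpl; [auto|].
  intros p. right. apply in_map. auto. Qed.

Lemma allfin_sum M (w : Fin.t M -> R) : fold_right Rplus 0 (map w (allfin M)) = fsum M w.
Proof. induction M; simpl; auto. rewrite map_map. rewrite (IHM (fun i => w (Fin.FS i))). auto. Qed.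

Definition hyb (x y : vec N) (l : list (Fin.t N)) : vec N :=
  fun i => if in_dec Fin.eq_dec i l then y i else x i.

Lemma hyb_btw x y l : btw x y (hyb x y l).
Proof. intros i. unfold hyb. destruct in_dec; unfold Rmin, Rmax; destruct Rle_dec; lra. Qed.

Lemma hyb_cons x y j l : hyb x y (j :: l) = upd (hyb x y l) j (y j).
Proof. apply functional_extensionality; intros i. unfold hyb, upd.
  destruct (Fin.eq_dec i j) as [E|E].
  - subst. destruct in_dec as [_|C]; auto. exfalso; apply C; left; auto.
  - destruct (in_dec Fin.eq_dec i (j :: l)) as [H|H]; destruct (in_dec Fin.eq_dec i l) as [H'|H']; auto.
    + destruct H; [congruence|contradiction].
    + exfalso. apply H. right. auto. Qed.

Lemma lip_hyb x y l : n1 (vsub x x0) + n1 (vsub y x0) <= R0 ->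
  Rabs (f (hyb x y l) - f x) <= L * fold_right Rplus 0 (map (fun j => Rabs (y j - x j)) l).
Proof. intros HR. induction l as [|j l IH]; simpl.
  - assert (hyb x y nil = x) as -> by (apply functional_extensionality; intros i; reflexivity).
    rewrite Rminus_diag, Rabs_R0. lra.
  - rewrite hyb_cons. pose proof (lip_step x y (hyb x y l) j HR (hyb_btw x y l)).
    replace (f (upd (hyb x y l) j (y j)) - f x) with
      ((f (upd (hyb x y l) j (y j)) - f (hyb x y l)) + (f (hyb x y l) - f x)) by ring.
    eapply Rle_trans; [apply Rabs_triang|]. lra. Qed.

Lemma lip_main x y : n1 (vsub x x0) + n1 (vsub y x0) <= R0 ->
  Rabs (f y - f x) <= L * n1 (vsub y x).
Proof. intros HR. pose proof (lip_hyb x y (allfin N) HR).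
  assert (hyb x y (allfin N) = y) as E.
  { apply functional_extensionality; intros i. unfold hyb. destruct in_dec as [_|C]; auto.
    exfalso; apply C; apply allfin_in. }
  rewrite E in H. rewrite allfin_sum in H. exact H. Qed.

End Lip.

Lemma fin_unif N (P : Fin.t N -> R -> R -> Prop) :
  (forall i r L r' L', P i r L -> 0 < r' <= r -> L <= L' -> P i r' L') ->
  (forall i, exists r L, 0 < r /\ P i r L) -> exists r L, 0 < r /\ forall i, P i r L.
Proof. induction N; intros Hm H.
  - exists 1, 0. split; [lra|]. intros i; inversion i.
  - destruct (H Fin.F1) as [r1 [L1 [Hr1 H1]]].
    destruct (IHN (fun i => P (Fin.FS i))) as [r2 [L2 [Hr2 H2]]].
    { intros; eapply Hm; eauto. }
    { intros i; apply H. }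
    exists (Rmin r1 r2), (Rmax L1 L2). split; [apply Rmin_glb_lt; auto|].
    intros i. apply (Fin.caseS' i).
    + eapply Hm; [apply H1| |apply Rmax_l]. split; [apply Rmin_glb_lt; auto|apply Rmin_l].
    + intros p. eapply Hm; [apply H2| |apply Rmax_r]. split; [apply Rmin_glb_lt; auto|apply Rmin_r].
Qed.

Lemma smooth_lip N (D : vec N -> Prop) f x0 R1 : 0 < R1 ->
  (forall z, n1 (vsub z x0) <= R1 -> D z) -> Ck 1 D f ->
  exists rho L, 0 < rho /\ 0 <= L /\ forall x y, n1 (vsub x x0) <= rho -> n1 (vsub y x0) <= rho ->
    Rabs (f y - f x) <= L * n1 (vsub y x).
Proof. intros HR1 HD [Hc Hder].
  assert (Dx0 : D x0). { apply HD. unfold n1, vsub. rewrite (fsum_ext _ _ (fun _ => 0)); [rewrite fsum_zero; lra|].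
    intros; rewrite Rminus_diag; apply Rabs_R0. }
  destruct (fin_unif N (fun j r L => exists g : vec N -> R,
     (forall z, n1 (vsub z x0) <= r -> derivable_pt_lim (fun t => f (upd z j (z j + t))) 0 (g z)) /\
     (forall z, n1 (vsub z x0) <= r -> Rabs (g z) <= L))) as [r [L [Hr HP]]].
  { intros i r L r' L' [g [G1 G2]] Hr' HL. exists g. split; intros z Hz.
    - apply G1; lra. - specialize (G2 z ltac:(lra)); lra. }
  { intros j. destruct (Hder j) as [g [G1 G2]]. simpl in G2.
    destruct (G2 x0 Dx0 1 ltac:(lra)) as [d [Hd Hg]].
    exists (Rmin R1 (d/2)), (Rabs (g x0) + 1). split; [apply Rmin_glb_lt; lra|].
    exists g. split; intros z Hz.
    - apply G1. apply HD. pose proof (Rmin_l R1 (d/2)). lra.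
    - assert (D z) by (apply HD; pose proof (Rmin_l R1 (d/2)); lra).
      assert (vnorm (vsub z x0) < d) by (pose proof (vnorm_le_n1 _ (vsub z x0)); pose proof (Rmin_r R1 (d/2)); lra).
      specialize (Hg z H H0). pose proof (Rabs_triang_inv (g z) (g x0)). lra. }
  exists (r/2), (Rmax L 0). split; [lra|]. split; [apply Rmax_r|].
  intros x y Hx Hy. eapply Rle_trans.
  - apply (lip_main N f x0 r (Rmax L 0)); [|lra].
    intros j. destruct (HP j) as [g [G1 G2]]. exists g; split; auto.
    intros z Hz. specialize (G2 z Hz). pose proof (Rmax_l L 0). lra.
  - lra.
Qed.


Definition sel2 (a b : R) (q : Fin.t 2) : R := match q with @Fin.F1 _ => a | @Fin.FS _ _ => b end.
Definition mk {n k} (V : vec n) (W : vec k) (a b : R) : vec (n + k + 2) :=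
  fun p => Fin.case_L_R' (fun _ => R) p (fun q => Fin.case_L_R' (fun _ => R) q V W) (sel2 a b).

Lemma pV_mk n k (V : vec n) (W : vec k) a b : pV (mk V W a b) = V.
Proof. apply functional_extensionality; intros i. unfold pV, mk.
  rewrite Fin.case_L_R'_L. rewrite Fin.case_L_R'_L. auto. Qed.
Lemma pW_mk n k (V : vec n) (W : vec k) a b : pW (mk V W a b) = W.
Proof. apply functional_extensionality; intros i. unfold pW, mk.
  rewrite Fin.case_L_R'_L. rewrite Fin.case_L_R'_R. auto. Qed.
Lemma pxi_mk n k (V : vec n) (W : vec k) a b : pxi (mk V W a b) = a.
Proof. unfold pxi, mk. rewrite Fin.case_L_R'_R. auto. Qed.
Lemma peps_mk n k (V : vec n) (W : vec k) a b : peps (mk V W a b) = b.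
Proof. unfold peps, mk. rewrite Fin.case_L_R'_R. auto. Qed.

Lemma n1_split n k (x y : vec (n + k + 2)) :
  n1 (vsub x y) = n1 (vsub (pV x) (pV y)) + n1 (vsub (pW x) (pW y)) + Rabs (pxi x - pxi y) + Rabs (peps x - peps y).
Proof. unfold n1. rewrite fsum_LR. rewrite (fsum_LR n k). simpl fsum at 3. unfold pV, pW, pxi, peps, vsub. simpl. ring. Qed.

Definition dist4 {n k} (V : vec n) (W : vec k) a b V' W' a' b' :=
  n1 (vsub V V') + n1 (vsub W W') + Rabs (a - a') + Rabs (b - b').

Lemma n1_vsub_zero N (W : vec N) : n1 (vsub W (vzero N)) = n1 W.
Proof. unfold n1, vsub, vzero. apply fsum_ext; intros; rewrite Rminus_0_r; auto. Qed.

Lemma lip4 n k (Ubar : vec n) d0 (F : vec n -> vec k -> R -> R -> R) : 0 < d0 ->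
  Ck 1 (box Ubar d0) (fun x => F (pV x) (pW x) (pxi x) (peps x)) ->
  exists rho L, 0 < rho /\ 0 <= L /\ forall V W a b V' W' a' b',
    dist4 V W a b Ubar (vzero k) 0 0 <= rho -> dist4 V' W' a' b' Ubar (vzero k) 0 0 <= rho ->
    Rabs (F V' W' a' b' - F V W a b) <= L * dist4 V' W' a' b' V W a b.
Proof. intros Hd0 Hck. set (x0 := mk Ubar (vzero k) 0 0).
  destruct (smooth_lip _ (box Ubar d0) (fun x : vec (n + k + 2) => F (pV x) (pW x) (pxi x) (peps x)) x0 (d0/2) ltac:(lra)) as [rho [L [Hr [HL Hlip]]]]; auto.
  { intros z Hz. rewrite n1_split in Hz. unfold x0 in Hz. rewrite pV_mk, pW_mk, pxi_mk, peps_mk in Hz.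
    rewrite n1_vsub_zero in Hz. rewrite !Rminus_0_r in Hz.
    pose proof (n1_nonneg _ (vsub (pV z) Ubar)). pose proof (n1_nonneg _ (pW z)).
    pose proof (Rabs_pos (pxi z)). pose proof (Rabs_pos (peps z)).
    pose proof (vnorm_le_n1 _ (vsub (pV z) Ubar)). pose proof (vnorm_le_n1 _ (pW z)).
    unfold box. lra. }
  exists rho, L. split; auto. split; auto. intros V W a b V' W' a' b' H1 H2.
  specialize (Hlip (mk V W a b) (mk V' W' a' b')). rewrite !pV_mk, !pW_mk, !pxi_mk, !peps_mk in Hlip.
  unfold x0 in Hlip. rewrite !n1_split in Hlip. rewrite !pV_mk, !pW_mk, !pxi_mk, !peps_mk in Hlip.
  apply Hlip; auto. Qed.


Lemma dist4_nonneg n k (V : vec n) (W : vec k) a b V' W' a' b' : 0 <= dist4 V W a b V' W' a' b'.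
Proof. unfold dist4. pose proof (n1_nonneg _ (vsub V V')). pose proof (n1_nonneg _ (vsub W W')).
  pose proof (Rabs_pos (a - a')). pose proof (Rabs_pos (b - b')). lra. Qed.

Lemma lipM n k P Q (Ubar : vec n) d0 (F : vec n -> vec k -> R -> R -> mat P Q) : 0 < d0 ->
  smooth_coef (box Ubar d0) F ->
  exists rho L, 0 < rho /\ 0 <= L /\ forall i j V W a b V' W' a' b',
    dist4 V W a b Ubar (vzero k) 0 0 <= rho -> dist4 V' W' a' b' Ubar (vzero k) 0 0 <= rho ->
    Rabs (F V' W' a' b' i j - F V W a b i j) <= L * dist4 V' W' a' b' V W a b.
Proof. intros Hd0 Hs.
  destruct (fin_unif P (fun i rho L => 0 <= L /\ forall j V W a b V' W' a' b',
    dist4 V W a b Ubar (vzero k) 0 0 <= rho -> dist4 V' W' a' b' Ubar (vzero k) 0 0 <= rho ->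
    Rabs (F V' W' a' b' i j - F V W a b i j) <= L * dist4 V' W' a' b' V W a b)) as [r [L [Hr HP]]].
  { intros i r L r' L' [HL H] Hr' HLL. split; [lra|]. intros. eapply Rle_trans; [apply H; lra|].
    apply Rmult_le_compat_r; auto. apply dist4_nonneg. }
  { intros i. destruct (fin_unif Q (fun j rho L => 0 <= L /\ forall V W a b V' W' a' b',
      dist4 V W a b Ubar (vzero k) 0 0 <= rho -> dist4 V' W' a' b' Ubar (vzero k) 0 0 <= rho ->
      Rabs (F V' W' a' b' i j - F V W a b i j) <= L * dist4 V' W' a' b' V W a b)) as [r [L [Hr HP]]].
    { intros j r L r' L' [HL H] Hr' HLL. split; [lra|]. intros. eapply Rle_trans; [apply H; lra|].
      apply Rmult_le_compat_r; auto. apply dist4_nonneg. }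
    { intros j. destruct (lip4 n k Ubar d0 (fun V W a b => F V W a b i j) Hd0 (Hs i j 1%nat)) as [rho [L [H1 [H2 H3]]]].
      exists rho, L. split; auto. }
    exists r, (Rmax L 0). split; auto. split; [apply Rmax_r|]. intros j. destruct (HP j) as [HL H].
    intros. eapply Rle_trans; [apply H; auto|]. apply Rmult_le_compat_r; [apply dist4_nonneg|apply Rmax_l]. }
  exists r, (Rmax L 0). split; auto. split; [apply Rmax_r|]. intros i. destruct (HP i) as [HL H].
  intros. eapply Rle_trans; [apply H; auto|]. apply Rmult_le_compat_r; [apply dist4_nonneg|apply Rmax_l].
Qed.

Lemma entry_bound P Q (M : mat P Q) : exists B, 0 <= B /\ forall i j, Rabs (M i j) <= B.
Proof. exists (fsum P (fun i => fsum Q (fun j => Rabs (M i j)))). split.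
  - apply fsum_nonneg; intros; apply fsum_nonneg; intros; apply Rabs_pos.
  - intros i j. eapply Rle_trans; [|apply (fsum_term P (fun i => fsum Q (fun j => Rabs (M i j))))].
    + apply (fsum_term Q (fun j => Rabs (M i j))). intros; apply Rabs_pos.
    + intros; apply fsum_nonneg; intros; apply Rabs_pos. Qed.

Lemma cv_zero : Un_cv (fun _ => 0) 0.
Proof. intros eps H. exists 0%nat. intros. unfold Rdist. rewrite Rminus_0_r, Rabs_R0. auto. Qed.

Lemma mmul_diag N (d e : Fin.t N -> R) : mmul (mdiag d) (mdiag e) = mdiag (fun i => d i * e i).
Proof. apply functional_extensionality; intros i. apply functional_extensionality; intros j.
  unfold mmul, mdiag.
  rewrite (fsum_ext _ _ (fun l => if Fin.eq_dec i l then d i * (if Fin.eq_dec l j then e l else 0) else 0)).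
  - rewrite fsum_delta. destruct (Fin.eq_dec i j); ring.
  - intros l. destruct (Fin.eq_dec i l); [subst; auto|ring]. Qed.

Lemma mpow_diag N (d : Fin.t N -> R) q : mpow (mdiag d) q = mdiag (fun i => d i ^ q).
Proof. induction q; simpl.
  - apply functional_extensionality; intros i. apply functional_extensionality; intros j. reflexivity.
  - rewrite IHq, mmul_diag. reflexivity. Qed.

Lemma mexp_diag N (d : Fin.t N -> R) : mexp (mdiag d) = mdiag (fun i => exp (d i)).
Proof. apply functional_extensionality; intros i. apply functional_extensionality; intros j.
  unfold mexp. match goal with |- epsilon _ ?P = _ => set (PP := P) end.
  assert (HP : PP (if Fin.eq_dec i j then exp (d i) else 0)).
  { unfold PP. destruct (Fin.eq_dec i j).
    - eapply Un_cv_ext; [|apply (Exp_prop.E1_cvg (d i))]. intros p. unfold Exp_prop.E1.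
      apply sum_eq. intros q _. rewrite mpow_diag. unfold mdiag. destruct (Fin.eq_dec i j); [|contradiction].
      unfold Rdiv. ring.
    - eapply Un_cv_ext; [|apply cv_zero]. intros p. simpl.
      rewrite sum_eq with (Bn := fun _ => 0). rewrite sum_cte; ring. intros q _.
      rewrite mpow_diag. unfold mdiag. destruct (Fin.eq_dec i j); [contradiction|]. unfold Rdiv; ring. }
  pose proof (epsilon_spec (inhabits 0) PP (ex_intro _ _ HP)) as HE.
  apply (UL_sequence _ _ _ HE HP). Qed.

Lemma mv_diag N (e : Fin.t N -> R) w i : mv (mdiag e) w i = e i * w i.
Proof. unfold mv, mdiag. rewrite (fsum_ext _ _ (fun j => if Fin.eq_dec i j then e i * w j else 0)).
  - apply fsum_delta. - intros j; destruct (Fin.eq_dec i j); [auto|ring]. Qed.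

Lemma diag_add N (a b : R) (d : Fin.t N -> R) :
  madd (mscal a (mdiag d)) (mscal b (mid N)) = mdiag (fun i => a * d i + b).
Proof. apply functional_extensionality; intros i. apply functional_extensionality; intros j.
  unfold madd, mscal, mdiag, mid. destruct (Fin.eq_dec i j); ring. Qed.

Lemma diag_sub N (a b : R) (d : Fin.t N -> R) :
  msub (mscal a (mdiag d)) (mscal b (mid N)) = mdiag (fun i => a * d i - b).
Proof. apply functional_extensionality; intros i. apply functional_extensionality; intros j.
  unfold msub, mscal, mdiag, mid. destruct (Fin.eq_dec i j); ring. Qed.


Lemma cont_mult (f g : R -> R) x : continuous f x -> continuous g x -> continuous (fun y => f y * g y) x.
Proof. intros. apply (continuous_mult f g); auto. Qed.
Lemma cont_plus (f g : R -> R) x : continuous f x -> continuous g x -> continuous (fun y => f y + g y) x.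
Proof. intros. apply (continuous_plus f g); auto. Qed.
Lemma cont_minus (f g : R -> R) x : continuous f x -> continuous g x -> continuous (fun y => f y - g y) x.
Proof. intros. apply (continuous_minus f g); auto. Qed.
Lemma cont_const (a : R) x : continuous (fun _ : R => a) x.
Proof. apply continuous_const. Qed.
Lemma cont_id x : continuous (fun y : R => y) x.
Proof. apply continuous_id. Qed.
Lemma cont_exp (f : R -> R) x : continuous f x -> continuous (fun y => exp (f y)) x.
Proof. apply continuous_exp_comp. Qed.
Lemma cont_abs (f : R -> R) x : continuous f x -> continuous (fun y => Rabs (f y)) x.
Proof. apply continuous_Rabs_comp. Qed.

Lemma cont_fsum N (f : Fin.t N -> R -> R) x : (forall i, continuous (f i) x) ->
  continuous (fun y => fsum N (fun i => f i y)) x.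
Proof. induction N; intros H; simpl.
  - apply cont_const.
  - apply cont_plus; [apply H|]. apply (IHN (fun i => f (Fin.FS i))). intros; apply H. Qed.

Lemma cont_eps (f : R -> R) x : continuous f x <->
  forall e, 0 < e -> exists d, 0 < d /\ forall y, Rabs (y - x) < d -> Rabs (f y - f x) < e.
Proof. split.
  - intros H e He. apply continuity_pt_filterlim in H. rewrite continuity_pt_locally in H.
    destruct (H (mkposreal e He)) as [d Hd]. exists d. split; [apply cond_pos|].
    intros y Hy. apply (Hd y). apply Hy.
  - intros H. apply continuity_pt_filterlim. apply continuity_pt_locally. intros e.
    destruct (H e (cond_pos e)) as [d [Hd H']]. exists (mkposreal d Hd). intros y Hy. apply H'. apply Hy. Qed.

Lemma cont_dom (F G : R -> R) x : (forall y, Rabs (F y - F x) <= G y) -> continuous G x -> G x = 0 ->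
  continuous F x.
Proof. intros H HG H0. apply cont_eps. intros e He. pose proof (proj1 (cont_eps G x) HG) as HG2. clear HG. rename HG2 into HG. destruct (HG e He) as [d [Hd H']].
  exists d. split; auto. intros y Hy. specialize (H' y Hy). rewrite H0, Rminus_0_r in H'.
  eapply Rle_lt_trans; [apply H|]. eapply Rle_lt_trans; [apply Rle_abs|]; auto. Qed.

Definition cl (T y : R) := Rmax 0 (Rmin T y).

Lemma cl_in T y : 0 <= T -> 0 <= cl T y <= T.
Proof. intros. unfold cl, Rmax, Rmin. repeat destruct Rle_dec; lra. Qed.
Lemma cl_id T y : 0 <= y <= T -> cl T y = y.
Proof. intros. unfold cl, Rmax, Rmin. repeat destruct Rle_dec; lra. Qed.
Lemma cl_lip T y y' : 0 <= T -> Rabs (cl T y' - cl T y) <= Rabs (y' - y).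
Proof. intros. unfold cl, Rmax, Rmin. repeat destruct Rle_dec; unfold Rabs; repeat destruct Rcase_abs; lra. Qed.

Lemma cont_cl T (f : R -> R) x : 0 <= T -> (forall y, 0 <= y <= T -> continuous f y) ->
  continuous (fun y => f (cl T y)) x.
Proof. intros HT H. pose proof (H (cl T x) (cl_in T x HT)) as Hc. rewrite cont_eps in Hc |- *.
  intros e He. destruct (Hc e He) as [d [Hd H']]. exists d; split; auto. intros y Hy.
  apply H'. eapply Rle_lt_trans; [apply cl_lip; auto|]; auto. Qed.

Lemma cont_int_of (f g : R -> R) T : (forall y, continuous g y) -> (forall y, 0 <= y <= T -> f y = g y) ->
  cont_int 0 T f.
Proof. intros Hg E x Hx e He. destruct (proj1 (cont_eps g x) (Hg x) e He) as [d [Hd H]].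
  exists d. split; auto. intros y Hy Hyx. rewrite !E by auto. auto. Qed.

Lemma cont_of_int (f : R -> R) T y : 0 <= y <= T -> cont_int 0 T f -> continuous (fun z => f (cl T z)) y.
Proof. intros Hy Hc. assert (HT : 0 <= T) by lra. apply cont_eps. intros e He.
  destruct (Hc (cl T y) (cl_in T y HT) e He) as [d [Hd H]]. exists d; split; auto.
  intros y' Hy'. apply H. apply cl_in; auto. eapply Rle_lt_trans; [apply cl_lip; auto|]; auto. Qed.

Lemma cont_RInt (f : R -> R) a x : (forall y, continuous f y) -> continuous (fun z => RInt f a z) x.
Proof. intros H. apply (continuous_RInt_1 f a x). exists (mkposreal 1 Rlt_0_1). intros y _.
  simpl. apply (RInt_correct f a y). apply ex_RInt_continuous. intros; apply H. Qed.

Lemma cont_unif (u : nat -> R -> R) (f : R -> R) (B : nat -> R) x :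
  (forall p, continuous (u p) x) -> (forall p y, Rabs (f y - u p y) <= B p) ->
  (forall e, 0 < e -> exists p, B p < e) -> continuous f x.
Proof. intros Hu Hb HB. apply cont_eps. intros e He.
  destruct (HB (e/3) ltac:(lra)) as [p Hp].
  destruct (proj1 (cont_eps _ x) (Hu p) (e/3) ltac:(lra)) as [d [Hd H]].
  exists d; split; auto. intros y Hy. specialize (H y Hy). pose proof (Hb p y). pose proof (Hb p x).
  replace (f y - f x) with ((f y - u p y) + (u p y - u p x) - (f x - u p x)) by ring.
  eapply Rle_lt_trans; [apply Rabs_triang|]. eapply Rle_lt_trans; [apply Rplus_le_compat_r, Rabs_triang|].
  rewrite Rabs_Ropp. lra. Qed.

Lemma RInt_abs_le (f g : R -> R) a b : a <= b -> ex_RInt f a b -> ex_RInt g a b ->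
  (forall y, a <= y <= b -> Rabs (f y) <= g y) -> Rabs (RInt f a b) <= RInt g a b.
Proof. intros Hab Hf Hg H. apply Rabs_le. split.
  - rewrite <- (Ropp_involutive (RInt f a b)). apply Ropp_le_contravar.
    assert (E : - RInt f a b = RInt (fun y => - f y) a b).
    { symmetry. apply (RInt_opp f a b Hf). }
    rewrite E. apply RInt_le; auto. { apply (ex_RInt_opp f a b Hf). }
    intros y Hy. specialize (H y ltac:(lra)). apply Rabs_le_between in H. lra.
  - apply RInt_le; auto. intros y Hy. specialize (H y ltac:(lra)). apply Rabs_le_between in H. lra. Qed.

Lemma RInt_exp (K al a b : R) : al <> 0 ->
  RInt (fun y => K * exp (al * y)) a b = K / al * (exp (al * b) - exp (al * a)).
Proof. intros Hal. apply is_RInt_unique.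
  replace (K / al * (exp (al * b) - exp (al * a))) with
    (minus ((fun y => K / al * exp (al * y)) b) ((fun y => K / al * exp (al * y)) a))
    by (unfold minus, plus, opp; simpl; ring).
  apply (is_RInt_derive (fun y => K / al * exp (al * y)) (fun y => K * exp (al * y))).
  - intros x _. auto_derive; auto. field. auto.
  - intros x _. apply cont_mult; [apply cont_const|]. apply cont_exp. apply cont_mult; [apply cont_const|apply cont_id]. Qed.

Lemma ex_RInt_exp (K al a b : R) : ex_RInt (fun y => K * exp (al * y)) a b.
Proof. apply (@ex_RInt_continuous R_CompleteNormedModule). intros. apply cont_mult; [apply cont_const|]. apply cont_exp.
  apply cont_mult; [apply cont_const|apply cont_id]. Qed.

Lemma exRI (f : R -> R) a b : (forall z, Rmin a b <= z <= Rmax a b -> continuous f z) -> ex_RInt f a b.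
Proof. apply (@ex_RInt_continuous R_CompleteNormedModule). Qed.

Lemma exp_le (x y : R) : x <= y -> exp x <= exp y.
Proof. intros H. destruct (Rle_lt_or_eq_dec x y H); [left; apply exp_increasing; auto|subst; lra]. Qed.

Lemma J1 (f : R -> R) c K z T : 0 < c -> 0 <= K -> 0 <= z <= T -> ex_RInt f z T ->
  (forall y, z <= y <= T -> Rabs (f y) <= K * exp (- c * y / 2)) ->
  Rabs (RInt f T z) <= 2 * K / c * exp (- c * z / 2).
Proof. intros Hc HK Hz Hf H.
  rewrite <- (opp_RInt_swap f z T Hf). unfold opp; simpl. rewrite Rabs_Ropp.
  eapply Rle_trans. apply (RInt_abs_le f (fun y => K * exp ((- c / 2) * y))); [lra|auto|apply ex_RInt_exp|].
  { intros y Hy. replace (- c / 2 * y) with (- c * y / 2) by field. auto. }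
  rewrite RInt_exp by lra. pose proof (exp_pos (- c / 2 * T)).
  replace (- c / 2 * z) with (- c * z / 2) by field.
  assert (K / (- c / 2) = - (2 * K / c)) by (field; lra). rewrite H1.
  assert (0 <= 2 * K / c) by (apply Rmult_le_pos; [lra|left; apply Rinv_0_lt_compat; lra]).
  nra. Qed.

Lemma J2 (h : R -> R) c K z l eps : 0 < c -> 0 <= K -> 0 <= z -> l <= - c -> 0 <= eps -> ex_RInt h 0 z ->
  (forall y, 0 <= y <= z -> Rabs (h y) <= exp (- l * y + eps * y ^ 2 / 2) * (K * exp (- c * y / 2))) ->
  Rabs (exp (l * z - eps * z ^ 2 / 2) * RInt h 0 z) <= 2 * K / c * exp (- c * z / 2).
Proof. intros Hc HK Hz Hl He Hh H.
  assert (E : exp (l * z - eps * z ^ 2 / 2) * RInt h 0 z = RInt (fun y => exp (l * z - eps * z ^ 2 / 2) * h y) 0 z).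
  { symmetry. apply (RInt_scal h 0 z _ Hh). }
  rewrite E. eapply Rle_trans.
  apply (RInt_abs_le _ (fun y => (K * exp (- c * z)) * exp ((c / 2) * y))); [lra| |apply ex_RInt_exp|].
  { apply (ex_RInt_scal h 0 z _ Hh). }
  { intros y Hy. rewrite Rabs_mult, Rabs_right by (apply Rle_ge; left; apply exp_pos).
    eapply Rle_trans; [apply Rmult_le_compat_l; [left; apply exp_pos|apply H; auto]|].
    rewrite <- Rmult_assoc, <- exp_plus.
    replace (K * exp (- c * z) * exp (c / 2 * y)) with (exp (- c * (z - y)) * (K * exp (- c * y / 2))).
    - apply Rmult_le_compat_r. { apply Rmult_le_pos; auto; left; apply exp_pos. }
      apply exp_le. assert (0 <= (z - y)) by lra. assert (y ^ 2 <= z ^ 2) by nra. nra.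
    - replace (- c * (z - y)) with (- c * z + c * y) by ring. rewrite exp_plus.
      replace (c * y) with (c / 2 * y + c / 2 * y) by field. rewrite exp_plus.
      replace (- c * y / 2) with (- (c / 2 * y)) by field. rewrite exp_Ropp.
      field. apply Rgt_not_eq, exp_pos. }
  rewrite RInt_exp by lra. rewrite Rmult_0_r, exp_0.
  replace (K * exp (- c * z) / (c / 2) * (exp (c / 2 * z) - 1)) with
    (2 * K / c * (exp (- c * z) * exp (c / 2 * z)) - 2 * K / c * exp (- c * z)) by (field; lra).
  rewrite <- exp_plus. replace (- c * z + c / 2 * z) with (- c * z / 2) by field.
  assert (0 <= 2 * K / c * exp (- c * z)). { apply Rmult_le_pos; [|left; apply exp_pos].
    apply Rmult_le_pos; [lra|left; apply Rinv_0_lt_compat; lra]. }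
  lra. Qed.

Lemma le_eps_0 x : (forall e, 0 < e -> Rabs x <= e) -> x = 0.
Proof. intros H. destruct (Req_dec x 0) as [E|E]; auto. exfalso.
  pose proof (Rabs_pos_lt x E). specialize (H (Rabs x / 2) ltac:(lra)). lra. Qed.

Lemma half_small C : 0 <= C -> forall e, 0 < e -> exists p, C * (/ 2) ^ p < e.
Proof. intros HC e He. destruct (pow_lt_1_zero (/ 2) ltac:(rewrite Rabs_right; lra) (e / (C + 1)) ltac:(apply Rdiv_lt_0_compat; lra)) as [N HN].
  exists N. specialize (HN N (le_n N)). rewrite Rabs_right in HN by (apply Rle_ge, pow_le; lra).
  pose proof (pow_le (/2) N ltac:(lra)).
  assert (C * (/ 2) ^ N <= (C + 1) * (/ 2) ^ N) by (apply Rmult_le_compat_r; lra).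
  assert ((C + 1) * (/ 2) ^ N < (C + 1) * (e / (C + 1))) by (apply Rmult_lt_compat_l; lra).
  replace ((C + 1) * (e / (C + 1))) with e in H1 by (field; lra). lra. Qed.

Lemma geo_bound (u : nat -> R) C : 0 <= C -> (forall p, Rabs (u (S p) - u p) <= C * (/ 2) ^ p) ->
  forall p d, Rabs (u (p + d)%nat - u p) <= 2 * C * (/ 2) ^ p - 2 * C * (/ 2) ^ (p + d).
Proof. intros HC H p d. induction d.
  - rewrite Nat.add_0_r, Rminus_diag, Rabs_R0. lra.
  - replace (p + S d)%nat with (S (p + d)) by lia.
    replace (u (S (p + d)) - u p) with ((u (S (p + d)) - u (p + d)%nat) + (u (p + d)%nat - u p)) by ring.
    eapply Rle_trans; [apply Rabs_triang|]. pose proof (H (p + d)%nat). simpl pow. lra. Qed.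

Lemma geo_cv (u : nat -> R) C : 0 <= C -> (forall p, Rabs (u (S p) - u p) <= C * (/ 2) ^ p) ->
  exists l, Un_cv u l /\ forall p, Rabs (l - u p) <= 2 * C * (/ 2) ^ p.
Proof. intros HC H.
  assert (HB : forall p q, (p <= q)%nat -> Rabs (u q - u p) <= 2 * C * (/ 2) ^ p).
  { intros p q Hpq. pose proof (geo_bound u C HC H p (q - p)) as G.
    replace (p + (q - p))%nat with q in G by lia.
    pose proof (pow_le (/2) q ltac:(lra)). assert (0 <= 2 * C * (/ 2) ^ q) by (apply Rmult_le_pos; lra). lra. }
  assert (Hc : Cauchy_crit u).
  { intros e He. destruct (half_small (2 * C) ltac:(lra) (e / 2) ltac:(lra)) as [N HN].
    exists N. intros a b Ha Hb. unfold Rdist. replace (u a - u b) with ((u a - u N) - (u b - u N)) by ring.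
    eapply Rle_lt_trans; [apply Rabs_triang|]. rewrite Rabs_Ropp.
    pose proof (HB N a Ha). pose proof (HB N b Hb). lra. }
  destruct (R_complete u Hc) as [l Hl]. exists l. split; auto.
  intros p. apply Rle_plus_epsilon. intros e He. destruct (Hl e He) as [N HN].
  specialize (HN (max N p) ltac:(lia)). unfold Rdist in HN.
  pose proof (HB p (max N p) ltac:(lia)).
  replace (l - u p) with (- (u (max N p) - l) + (u (max N p) - u p)) by ring.
  eapply Rle_trans; [apply Rabs_triang|]. rewrite Rabs_Ropp. lra. Qed.


Section Core.
Variables (n k : nat) (Psi : vec n -> vec k -> R -> R -> mat n k) (Lam Ups : vec n -> vec k -> R -> R -> mat k k)
  (Ubar : vec n) (lb : Fin.t k -> R) (c eps T delta : R) (Ue : vec n) (Wbar : vec k) (rho Lc Bp A0 B0 : R).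
Hypothesis Hc : 0 < c.
Hypothesis Hlb : forall i, lb i <= - c.
Hypothesis Heps : 0 < eps.
Hypothesis HT : eps * T = delta.
Hypothesis Hed : eps <= delta.
Hypothesis HA0 : 0 <= A0.
Hypothesis HB0 : 0 <= B0.
Hypothesis Hreg : A0 + B0 + 2 * delta <= rho.
Hypothesis HLc : 0 <= Lc.
Hypothesis HBp : 0 <= Bp.
Definition inreg V W a b := dist4 V W a b Ubar (vzero k) 0 0 <= rho.
Hypothesis HPsiL : forall i j V W a b V' W' a' b', inreg V W a b -> inreg V' W' a' b' ->
  Rabs (Psi V' W' a' b' i j - Psi V W a b i j) <= Lc * dist4 V' W' a' b' V W a b.
Hypothesis HLamL : forall i j V W a b V' W' a' b', inreg V W a b -> inreg V' W' a' b' ->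
  Rabs (Lam V' W' a' b' i j - Lam V W a b i j) <= Lc * dist4 V' W' a' b' V W a b.
Hypothesis HUpsL : forall i j V W a b V' W' a' b', inreg V W a b -> inreg V' W' a' b' ->
  Rabs (Ups V' W' a' b' i j - Ups V W a b i j) <= Lc * dist4 V' W' a' b' V W a b.
Hypothesis HPsiB : forall i j V W a b, inreg V W a b -> Rabs (Psi V W a b i j) <= Bp.
Hypothesis HLam0 : Lam Ubar (vzero k) 0 0 = mdiag lb.
Hypothesis HUps0 : Ups Ubar (vzero k) 0 0 = mid k.

Lemma HTpos : 0 < T.
Proof. assert (0 < delta) by lra. nra. Qed.

Definition ct y := cl T y.

Definition IV (V : R -> vec n) (W : R -> vec k) i y :=
  mv (Psi (V (ct y)) (W (ct y)) (eps * ct y) eps) (W (ct y)) i.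
Definition MWm (V : R -> vec n) (W : R -> vec k) y : mat k k :=
  msub (msub (Lam (V (ct y)) (W (ct y)) (eps * ct y) eps) (mdiag lb))
       (mscal (eps * ct y) (msub (Ups (V (ct y)) (W (ct y)) (eps * ct y) eps) (mid k))).
Definition IW (V : R -> vec n) (W : R -> vec k) i y := mv (MWm V W y) (W (ct y)) i.
Definition GW (V : R -> vec n) (W : R -> vec k) i y := exp (- lb i * y + eps * y ^ 2 / 2) * IW V W i y.
Definition Ew i z := exp (lb i * z - eps * z ^ 2 / 2).
Definition PhiV (V : R -> vec n) (W : R -> vec k) z : vec n := fun i => Ue i + RInt (IV V W i) T z.
Definition PhiW (V : R -> vec n) (W : R -> vec k) z : vec k := fun i => Ew i z * (Wbar i + RInt (GW V W i) 0 z).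

Definition inR (V : R -> vec n) (W : R -> vec k) a b := forall y, 0 <= y <= T ->
  n1 (vsub (V y) Ubar) <= a /\ n1 (W y) <= b * exp (- c * y / 2).

Definition mu := (1 + delta) * Lc * (A0 + B0 + 2 * delta).

Lemma exp_c_le1 y : 0 <= y -> exp (- c * y / 2) <= 1.
Proof. intros. rewrite <- exp_0. apply exp_le. nra. Qed.

Lemma reg_ok (V : vec n) (W : vec k) y : 0 <= y <= T -> n1 (vsub V Ubar) <= A0 -> n1 W <= B0 ->
  inreg V W (eps * y) eps.
Proof. intros Hy HV HW. unfold inreg, dist4. rewrite n1_vsub_zero. rewrite !Rminus_0_r.
  rewrite !Rabs_right by nra. assert (eps * y <= delta) by nra. lra. Qed.

Lemma inR_pt V W a b y : inR V W a b -> a <= A0 -> b <= B0 -> 0 <= b ->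
  inreg (V (ct y)) (W (ct y)) (eps * ct y) eps /\ n1 (W (ct y)) <= b * exp (- c * ct y / 2).
Proof. intros H Ha Hb Hb0. pose proof (cl_in T y (Rlt_le _ _ HTpos)) as Hy. fold (ct y) in Hy.
  destruct (H _ Hy) as [H1 H2]. split; auto. apply reg_ok; auto. lra.
  pose proof (exp_c_le1 (ct y) ltac:(lra)). pose proof (exp_pos (- c * ct y / 2)). nra. Qed.

Lemma base_reg : inreg Ubar (vzero k) 0 0.
Proof. unfold inreg, dist4. unfold n1, vsub, vzero.
  rewrite (fsum_ext _ _ (fun _ => 0)) by (intros; rewrite Rminus_diag; apply Rabs_R0).
  rewrite (fsum_ext k _ (fun _ => 0)) by (intros; rewrite Rminus_diag; apply Rabs_R0).
  rewrite !fsum_zero, Rminus_diag, Rabs_R0. lra. Qed.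

Lemma dist_base V W y : 0 <= y <= T -> n1 (vsub V Ubar) <= A0 -> n1 W <= B0 ->
  dist4 V W (eps * y) eps Ubar (vzero k) 0 0 <= A0 + B0 + 2 * delta.
Proof. intros Hy HV HW. unfold dist4. rewrite n1_vsub_zero. rewrite !Rminus_0_r.
  rewrite !Rabs_right by nra. assert (eps * y <= delta) by nra. lra. Qed.

Lemma MW_bound V W a b y i j : inR V W a b -> a <= A0 -> b <= B0 -> 0 <= b ->
  Rabs (MWm V W y i j) <= mu.
Proof. intros H Ha Hb Hb0. destruct (inR_pt V W a b y H Ha Hb Hb0) as [Hr _].
  pose proof (cl_in T y (Rlt_le _ _ HTpos)) as Hy. fold (ct y) in Hy. destruct (H _ Hy) as [H1 H2].
  assert (HD : dist4 (V (ct y)) (W (ct y)) (eps * ct y) eps Ubar (vzero k) 0 0 <= A0 + B0 + 2 * delta).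
  { apply dist_base; auto. lra. pose proof (exp_c_le1 (ct y) ltac:(lra)). pose proof (exp_pos (- c * ct y / 2)). nra. }
  pose proof (HLamL i j _ _ _ _ _ _ _ _ base_reg Hr) as L1. pose proof (HUpsL i j _ _ _ _ _ _ _ _ base_reg Hr) as L2.
  rewrite HLam0 in L1. rewrite HUps0 in L2.
  unfold MWm, msub, mscal. set (D := dist4 (V (ct y)) (W (ct y)) (eps * ct y) eps Ubar (vzero k) 0 0) in *.
  assert (0 <= eps * ct y <= delta) by (split; nra).
  pose proof (dist4_nonneg _ _ (V (ct y)) (W (ct y)) (eps * ct y) eps Ubar (vzero k) 0 0). fold D in H3.
  eapply Rle_trans; [apply Rabs_triang|]. rewrite Rabs_Ropp, Rabs_mult, (Rabs_right (eps * ct y)) by lra.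
  unfold mu. assert (Lc * D <= Lc * (A0 + B0 + 2 * delta)) by (apply Rmult_le_compat_l; auto).
  assert (eps * ct y * Rabs (Ups (V (ct y)) (W (ct y)) (eps * ct y) eps i j - mid k i j) <= delta * (Lc * D)).
  { apply Rmult_le_compat; auto; try lra. apply Rabs_pos. }
  assert (0 <= delta * (Lc * D)) by (apply Rmult_le_pos; [lra|apply Rmult_le_pos; auto]).
  nra. Qed.


Lemma n1_vsub_sym N (x y : vec N) : n1 (vsub x y) = n1 (vsub y x).
Proof. unfold n1, vsub. apply fsum_ext. intros. rewrite <- Rabs_Ropp. f_equal. ring. Qed.

Lemma mv_diff P Q (M M' : mat P Q) w w' i Bm Dm : (forall j, Rabs (M i j) <= Bm) ->
  (forall j, Rabs (M i j - M' i j) <= Dm) ->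
  Rabs (mv M w i - mv M' w' i) <= Bm * n1 (vsub w w') + Dm * n1 w'.
Proof. intros H1 H2. unfold mv.
  replace (fsum Q (fun j => M i j * w j) - fsum Q (fun j => M' i j * w' j)) with
    (fsum Q (fun j => M i j * (w j - w' j) + (M i j - M' i j) * w' j)).
  2:{ rewrite fsum_plus. rewrite (fsum_ext _ (fun j => M i j * (w j - w' j)) (fun j => M i j * w j + (-1) * (M i j * w' j))) by (intros; ring).
      rewrite (fsum_ext _ (fun j => (M i j - M' i j) * w' j) (fun j => M i j * w' j + (-1) * (M' i j * w' j))) by (intros; ring).
      rewrite !fsum_plus, !fsum_scal. ring. }
  eapply Rle_trans; [apply fsum_abs|]. unfold n1, vsub. rewrite <- !fsum_scal, <- fsum_plus.
  apply fsum_le. intros j. eapply Rle_trans; [apply Rabs_triang|]. rewrite !Rabs_mult.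
  apply Rplus_le_compat; apply Rmult_le_compat_r; auto; apply Rabs_pos. Qed.

Lemma P1 V W a b i y : inR V W a b -> a <= A0 -> b <= B0 -> 0 <= b ->
  Rabs (IV V W i y) <= Bp * (b * exp (- c * ct y / 2)).
Proof. intros H Ha Hb Hb0. destruct (inR_pt V W a b y H Ha Hb Hb0) as [Hr Hw].
  unfold IV. eapply Rle_trans; [apply mv_bound|]. { intros j; apply HPsiB; auto. }
  apply Rmult_le_compat_l; auto. Qed.

Lemma P2 V W a b i y : inR V W a b -> a <= A0 -> b <= B0 -> 0 <= b ->
  Rabs (IW V W i y) <= mu * (b * exp (- c * ct y / 2)).
Proof. intros H Ha Hb Hb0. destruct (inR_pt V W a b y H Ha Hb Hb0) as [Hr Hw].
  unfold IW. eapply Rle_trans; [apply mv_bound|]. { intros j; apply (MW_bound V W a b); auto. }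
  apply Rmult_le_compat_l; auto. unfold mu. apply Rmult_le_pos; [apply Rmult_le_pos; auto; lra|lra]. Qed.

Lemma mu_nonneg : 0 <= mu.
Proof. unfold mu. apply Rmult_le_pos; [apply Rmult_le_pos; auto; lra|lra]. Qed.

Lemma P3 V W V' W' i y dv dw : inR V W A0 B0 -> inR V' W' A0 B0 ->
  n1 (vsub (V (ct y)) (V' (ct y))) <= dv -> n1 (vsub (W (ct y)) (W' (ct y))) <= dw ->
  Rabs (IV V W i y - IV V' W' i y) <= Bp * dw + Lc * (dv + dw) * (B0 * exp (- c * ct y / 2)).
Proof. intros H H' Hv Hw. destruct (inR_pt V W A0 B0 y H) as [Hr _]; try lra.
  destruct (inR_pt V' W' A0 B0 y H') as [Hr' Hw']; try lra.
  unfold IV. eapply Rle_trans; [apply (mv_diff _ _ _ _ _ _ i Bp (Lc * (dv + dw)))|].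
  - intros j; apply HPsiB; auto.
  - intros j. rewrite <- Rabs_Ropp. replace (- (Psi (V (ct y)) (W (ct y)) (eps * ct y) eps i j -
      Psi (V' (ct y)) (W' (ct y)) (eps * ct y) eps i j)) with
      (Psi (V' (ct y)) (W' (ct y)) (eps * ct y) eps i j - Psi (V (ct y)) (W (ct y)) (eps * ct y) eps i j) by ring.
    eapply Rle_trans; [apply HPsiL; auto|]. apply Rmult_le_compat_l; auto.
    unfold dist4. rewrite !Rminus_diag, Rabs_R0. rewrite (n1_vsub_sym _ (V' _)), (n1_vsub_sym _ (W' _)). lra.
  - apply Rplus_le_compat. apply Rmult_le_compat_l; auto.
    apply Rmult_le_compat_l; auto. apply Rmult_le_pos; auto.
    pose proof (n1_nonneg _ (vsub (V (ct y)) (V' (ct y)))). pose proof (n1_nonneg _ (vsub (W (ct y)) (W' (ct y)))). lra. Qed.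

Lemma P4 V W V' W' i y dv dw : inR V W A0 B0 -> inR V' W' A0 B0 ->
  n1 (vsub (V (ct y)) (V' (ct y))) <= dv -> n1 (vsub (W (ct y)) (W' (ct y))) <= dw ->
  Rabs (IW V W i y - IW V' W' i y) <= mu * dw + (1 + delta) * Lc * (dv + dw) * (B0 * exp (- c * ct y / 2)).
Proof. intros H H' Hv Hw. destruct (inR_pt V W A0 B0 y H) as [Hr _]; try lra.
  destruct (inR_pt V' W' A0 B0 y H') as [Hr' Hw']; try lra.
  assert (0 <= dv + dw) by (pose proof (n1_nonneg _ (vsub (V (ct y)) (V' (ct y)))); pose proof (n1_nonneg _ (vsub (W (ct y)) (W' (ct y)))); lra).
  assert (Hd : dist4 (V' (ct y)) (W' (ct y)) (eps * ct y) eps (V (ct y)) (W (ct y)) (eps * ct y) eps <= dv + dw).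
  { unfold dist4. rewrite !Rminus_diag, Rabs_R0. rewrite (n1_vsub_sym _ (V' _)), (n1_vsub_sym _ (W' _)). lra. }
  pose proof (cl_in T y (Rlt_le _ _ HTpos)) as Hy. fold (ct y) in Hy.
  assert (0 <= eps * ct y <= delta) by (split; nra).
  unfold IW. eapply Rle_trans; [apply (mv_diff _ _ _ _ _ _ i mu ((1 + delta) * Lc * (dv + dw)))|].
  - intros j; apply (MW_bound V W A0 B0); auto; lra.
  - intros j. unfold MWm, msub, mscal.
    pose proof (HLamL i j _ _ _ _ _ _ _ _ Hr Hr') as L1. pose proof (HUpsL i j _ _ _ _ _ _ _ _ Hr Hr') as L2.
    set (l := Lam (V (ct y)) (W (ct y)) (eps * ct y) eps i j) in *.
    set (l' := Lam (V' (ct y)) (W' (ct y)) (eps * ct y) eps i j) in *.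
    set (u := Ups (V (ct y)) (W (ct y)) (eps * ct y) eps i j) in *.
    set (u' := Ups (V' (ct y)) (W' (ct y)) (eps * ct y) eps i j) in *.
    replace (l - mdiag lb i j - eps * ct y * (u - mid k i j) - (l' - mdiag lb i j - eps * ct y * (u' - mid k i j)))
      with (- (l' - l) + eps * ct y * (u' - u)) by ring.
    eapply Rle_trans; [apply Rabs_triang|]. rewrite Rabs_Ropp, Rabs_mult, (Rabs_right (eps * ct y)) by lra.
    assert (Lc * dist4 (V' (ct y)) (W' (ct y)) (eps * ct y) eps (V (ct y)) (W (ct y)) (eps * ct y) eps <= Lc * (dv + dw))
      by (apply Rmult_le_compat_l; auto).
    assert (eps * ct y * Rabs (u' - u) <= delta * (Lc * (dv + dw))).
    { apply Rmult_le_compat; try lra. apply Rabs_pos. }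
    assert (0 <= Lc * (dv + dw)) by (apply Rmult_le_pos; auto). nra.
  - apply Rplus_le_compat. apply Rmult_le_compat_l; auto. apply mu_nonneg.
    apply Rmult_le_compat_l; auto. apply Rmult_le_pos; auto. apply Rmult_le_pos; auto; lra. Qed.


Lemma Ew_pos i z : 0 < Ew i z.
Proof. apply exp_pos. Qed.

Lemma Ew_le i z : 0 <= z -> Ew i z <= exp (- c * z / 2).
Proof. intros Hz. apply exp_le. pose proof (Hlb i). assert (0 <= eps * z ^ 2) by (apply Rmult_le_pos; [lra|apply pow2_ge_0]). nra. Qed.

Lemma ct_id y : 0 <= y <= T -> ct y = y.
Proof. apply cl_id. Qed.

Lemma Inv V W a b : inR V W a b -> 0 <= a <= A0 -> 0 <= b <= B0 ->
  (forall i z, 0 <= z <= T -> ex_RInt (IV V W i) z T) ->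
  (forall i z, 0 <= z <= T -> ex_RInt (GW V W i) 0 z) ->
  inR (PhiV V W) (PhiW V W) (n1 (vsub Ue Ubar) + INR n * (2 * (Bp * b) / c)) (n1 Wbar + INR k * (2 * (mu * b) / c)).
Proof. intros H Ha Hb HexV HexW z Hz.
  assert (HK1 : 0 <= Bp * b) by (apply Rmult_le_pos; lra).
  assert (HK2 : 0 <= mu * b) by (apply Rmult_le_pos; [apply mu_nonneg|lra]).
  assert (Hcinv : 0 < / c) by (apply Rinv_0_lt_compat; lra).
  pose proof (exp_c_le1 z ltac:(lra)) as He1. pose proof (exp_pos (- c * z / 2)) as He0.
  split.
  - apply Rle_trans with (fsum n (fun i => Rabs (Ue i - Ubar i) + 2 * (Bp * b) / c)).
    + apply fsum_le; intros i. unfold vsub, PhiV.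
      replace (Ue i + RInt (IV V W i) T z - Ubar i) with ((Ue i - Ubar i) + RInt (IV V W i) T z) by ring.
      eapply Rle_trans; [apply Rabs_triang|]. apply Rplus_le_compat_l.
      eapply Rle_trans; [apply (J1 _ c (Bp * b) z T); auto|].
      * intros y Hy. rewrite <- (ct_id y) at 2 by lra. rewrite Rmult_assoc. apply (P1 V W a b); [exact H|lra|lra|lra].
      * assert (0 <= 2 * (Bp * b) / c) by (unfold Rdiv; apply Rmult_le_pos; lra). nra.
    + rewrite fsum_plus, fsum_const. unfold n1, vsub. lra.
  - apply Rle_trans with (fsum k (fun i => (Rabs (Wbar i) + 2 * (mu * b) / c) * exp (- c * z / 2))).
    + apply fsum_le; intros i. unfold PhiW. rewrite Rmult_plus_distr_l.
      eapply Rle_trans; [apply Rabs_triang|]. rewrite Rmult_plus_distr_r. apply Rplus_le_compat.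
      * rewrite Rabs_mult, Rabs_right by (left; apply Ew_pos). rewrite Rmult_comm.
        apply Rmult_le_compat_l; [apply Rabs_pos|]. apply Ew_le; lra.
      * apply (J2 _ c (mu * b) z (lb i) eps); auto; try lra.
        intros y Hy. unfold GW. rewrite Rabs_mult, Rabs_right by (left; apply exp_pos).
        apply Rmult_le_compat_l; [left; apply exp_pos|]. rewrite <- (ct_id y) at 2 by lra.
        rewrite Rmult_assoc. apply (P2 V W a b); [exact H|lra|lra|lra].
    + rewrite (fsum_ext _ _ (fun i => exp (- c * z / 2) * (Rabs (Wbar i) + 2 * (mu * b) / c))) by (intros; ring).
      rewrite fsum_scal, fsum_plus, fsum_const. unfold n1. lra.
Qed.

Lemma Con V W V' W' s lam : inR V W A0 B0 -> inR V' W' A0 B0 -> 0 <= s -> 1 <= lam ->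
  (forall y, 0 <= y <= T -> n1 (vsub (V y) (V' y)) <= s /\ n1 (vsub (W y) (W' y)) <= s / lam * exp (- c * y / 2)) ->
  (forall i z, 0 <= z <= T -> ex_RInt (IV V W i) z T) ->
  (forall i z, 0 <= z <= T -> ex_RInt (GW V W i) 0 z) ->
  (forall i z, 0 <= z <= T -> ex_RInt (IV V' W' i) z T) ->
  (forall i z, 0 <= z <= T -> ex_RInt (GW V' W' i) 0 z) ->
  forall z, 0 <= z <= T ->
    n1 (vsub (PhiV V W z) (PhiV V' W' z)) <= INR n * (2 * ((Bp / lam + Lc * (1 + 1 / lam) * B0) * s) / c) /\
    n1 (vsub (PhiW V W z) (PhiW V' W' z)) <= INR k * (2 * ((mu / lam + (1 + delta) * Lc * (1 + 1 / lam) * B0) * s) / c) * exp (- c * z / 2).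
Proof. intros H H' Hs Hlam Hd HV HW HV' HW' z Hz.
  assert (Hcinv : 0 < / c) by (apply Rinv_0_lt_compat; lra).
  assert (Hl0 : 0 < / lam) by (apply Rinv_0_lt_compat; lra).
  assert (Hl1 : / lam <= 1) by (rewrite <- Rinv_1; apply Rinv_le_contravar; lra).
  set (KV := (Bp / lam + Lc * (1 + 1 / lam) * B0) * s).
  set (KW := (mu / lam + (1 + delta) * Lc * (1 + 1 / lam) * B0) * s).
  assert (HKV : 0 <= KV). { unfold KV. apply Rmult_le_pos; auto. unfold Rdiv.
    apply Rplus_le_le_0_compat; [apply Rmult_le_pos; lra|]. apply Rmult_le_pos; auto. apply Rmult_le_pos; auto. lra. }
  assert (HKW : 0 <= KW). { unfold KW. apply Rmult_le_pos; auto. unfold Rdiv.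
    apply Rplus_le_le_0_compat; [apply Rmult_le_pos; [apply mu_nonneg|lra]|]. apply Rmult_le_pos; auto. apply Rmult_le_pos; [|lra]. apply Rmult_le_pos; lra. }
  assert (PD : forall y, 0 <= y <= T ->
     n1 (vsub (V (ct y)) (V' (ct y))) <= s /\ n1 (vsub (W (ct y)) (W' (ct y))) <= s / lam * exp (- c * ct y / 2)).
  { intros y Hy. rewrite ct_id by lra. auto. }
  pose proof (exp_c_le1 z ltac:(lra)) as He1. pose proof (exp_pos (- c * z / 2)) as He0.
  split.
  - apply Rle_trans with (fsum n (fun _ => 2 * KV / c)).
    + apply fsum_le; intros i. unfold vsub, PhiV.
      replace (Ue i + RInt (IV V W i) T z - (Ue i + RInt (IV V' W' i) T z)) with
        (RInt (IV V W i) T z - RInt (IV V' W' i) T z) by ring.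
      assert (E : RInt (IV V W i) T z - RInt (IV V' W' i) T z = RInt (fun y => IV V W i y - IV V' W' i y) T z)
        by (symmetry; apply (RInt_minus (IV V W i) (IV V' W' i) T z); apply ex_RInt_swap; auto).
      rewrite E.
      eapply Rle_trans; [apply (J1 _ c KV z T); auto|].
      * apply (ex_RInt_minus (IV V W i) (IV V' W' i) z T); auto.
      * intros y Hy. destruct (PD y ltac:(lra)) as [D1 D2].
        eapply Rle_trans; [apply (P3 V W V' W' i y s (s / lam * exp (- c * ct y / 2))); auto|].
        rewrite ct_id by lra. pose proof (exp_c_le1 y ltac:(lra)). pose proof (exp_pos (- c * y / 2)).
        set (e := exp (- c * y / 2)) in *.
        unfold KV. unfold Rdiv. rewrite Rmult_1_l.
        assert (s * / lam * e <= s * / lam) by (rewrite <- (Rmult_1_r (s * / lam)) at 2; apply Rmult_le_compat_l; [apply Rmult_le_pos|]; lra).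
        assert (0 <= s * / lam * e) by (repeat apply Rmult_le_pos; lra).
        assert (Lc * (s + s * / lam * e) * (B0 * e) <= Lc * (1 + / lam) * B0 * s * e).
        { replace (Lc * (1 + / lam) * B0 * s * e) with (Lc * (s + s * / lam) * (B0 * e)) by ring.
          apply Rmult_le_compat_r; [apply Rmult_le_pos; lra|]. apply Rmult_le_compat_l; lra. }
        assert (Bp * (s * / lam * e) = Bp * / lam * s * e) by ring. nra.
      * assert (0 <= 2 * KV / c) by (unfold Rdiv; apply Rmult_le_pos; lra). nra.
    + rewrite fsum_const. lra.
  - apply Rle_trans with (fsum k (fun _ => 2 * KW / c * exp (- c * z / 2))).
    + apply fsum_le; intros i. unfold vsub, PhiW.
      replace (Ew i z * (Wbar i + RInt (GW V W i) 0 z) - Ew i z * (Wbar i + RInt (GW V' W' i) 0 z)) with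
        (Ew i z * (RInt (GW V W i) 0 z - RInt (GW V' W' i) 0 z)) by ring.
      assert (E : RInt (GW V W i) 0 z - RInt (GW V' W' i) 0 z = RInt (fun y => GW V W i y - GW V' W' i y) 0 z)
        by (symmetry; apply (RInt_minus (GW V W i) (GW V' W' i) 0 z); auto).
      rewrite E.
      apply (J2 _ c KW z (lb i) eps); auto; try lra.
      * apply (ex_RInt_minus (GW V W i) (GW V' W' i) 0 z); auto.
      * intros y Hy. unfold GW. rewrite <- Rmult_minus_distr_l.
        rewrite Rabs_mult, Rabs_right by (left; apply exp_pos).
        apply Rmult_le_compat_l; [left; apply exp_pos|].
        destruct (PD y ltac:(lra)) as [D1 D2].
        eapply Rle_trans; [apply (P4 V W V' W' i y s (s / lam * exp (- c * ct y / 2))); auto|].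
        rewrite ct_id by lra. pose proof (exp_c_le1 y ltac:(lra)). pose proof (exp_pos (- c * y / 2)).
        set (e := exp (- c * y / 2)) in *.
        unfold KW. unfold Rdiv. rewrite Rmult_1_l. pose proof mu_nonneg.
        assert (s * / lam * e <= s * / lam) by (rewrite <- (Rmult_1_r (s * / lam)) at 2; apply Rmult_le_compat_l; [apply Rmult_le_pos|]; lra).
        assert (0 <= s * / lam * e) by (repeat apply Rmult_le_pos; lra).
        assert ((1 + delta) * Lc * (s + s * / lam * e) * (B0 * e) <= (1 + delta) * Lc * (1 + / lam) * B0 * s * e).
        { replace ((1 + delta) * Lc * (1 + / lam) * B0 * s * e) with ((1 + delta) * Lc * (s + s * / lam) * (B0 * e)) by ring.
          apply Rmult_le_compat_r; [apply Rmult_le_pos; lra|]. apply Rmult_le_compat_l; [apply Rmult_le_pos; lra|lra]. }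
        assert (mu * (s * / lam * e) = mu * / lam * s * e) by ring. nra.
    + rewrite fsum_const. lra.
Qed.


Lemma cont_ct y : continuous ct y.
Proof. unfold ct. apply (cont_cl T (fun x => x)); [left; apply HTpos|]. intros; apply cont_id. Qed.

Lemma cont_n1diff N (f : R -> vec N) y : (forall j x, continuous (fun t => f t j) x) ->
  continuous (fun t => n1 (vsub (f t) (f y))) y.
Proof. intros H. unfold n1, vsub. apply (cont_fsum N (fun j t => Rabs (f t j - f y j))). intros j.
  apply cont_abs. apply cont_minus; [apply H|apply cont_const]. Qed.

Lemma cont_F P Q (F : vec n -> vec k -> R -> R -> mat P Q) V W a b :
  (forall i j V W a b V' W' a' b', inreg V W a b -> inreg V' W' a' b' ->
    Rabs (F V' W' a' b' i j - F V W a b i j) <= Lc * dist4 V' W' a' b' V W a b) ->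
  inR V W a b -> a <= A0 -> b <= B0 -> 0 <= b ->
  (forall j x, continuous (fun t => V (ct t) j) x) -> (forall j x, continuous (fun t => W (ct t) j) x) ->
  forall i j y, continuous (fun t => F (V (ct t)) (W (ct t)) (eps * ct t) eps i j) y.
Proof. intros HF H Ha Hb Hb0 CV CW i j y.
  apply (cont_dom _ (fun t => Lc * dist4 (V (ct t)) (W (ct t)) (eps * ct t) eps (V (ct y)) (W (ct y)) (eps * ct y) eps)).
  - intros t. apply HF; apply (inR_pt V W a b); auto.
  - apply cont_mult; [apply cont_const|]. unfold dist4.
    apply cont_plus; [apply cont_plus; [apply cont_plus|]|].
    + apply (cont_n1diff n (fun t => V (ct t))). auto.
    + apply (cont_n1diff k (fun t => W (ct t))). auto.
    + apply cont_abs. apply cont_minus; [|apply cont_const]. apply cont_mult; [apply cont_const|apply cont_ct].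
    + apply cont_const.
  - unfold dist4. unfold n1, vsub. rewrite !Rminus_diag, Rabs_R0.
    rewrite (fsum_ext _ _ (fun _ => 0)) by (intros; rewrite Rminus_diag; apply Rabs_R0).
    rewrite (fsum_ext k _ (fun _ => 0)) by (intros; rewrite Rminus_diag; apply Rabs_R0).
    rewrite !fsum_zero. ring. Qed.

Lemma cont_IV V W a b : inR V W a b -> a <= A0 -> b <= B0 -> 0 <= b ->
  (forall j x, continuous (fun t => V (ct t) j) x) -> (forall j x, continuous (fun t => W (ct t) j) x) ->
  forall i y, continuous (IV V W i) y.
Proof. intros H Ha Hb Hb0 CV CW i y. unfold IV, mv.
  apply (cont_fsum k (fun j t => Psi (V (ct t)) (W (ct t)) (eps * ct t) eps i j * W (ct t) j)).
  intros j. apply cont_mult; auto. apply (cont_F n k Psi V W a b); auto. Qed.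

Lemma cont_GW V W a b : inR V W a b -> a <= A0 -> b <= B0 -> 0 <= b ->
  (forall j x, continuous (fun t => V (ct t) j) x) -> (forall j x, continuous (fun t => W (ct t) j) x) ->
  forall i y, continuous (GW V W i) y.
Proof. intros H Ha Hb Hb0 CV CW i y. unfold GW. apply cont_mult.
  - apply cont_exp. apply cont_plus; [apply cont_mult; [apply cont_const|apply cont_id]|].
    unfold Rdiv. apply cont_mult; [|apply cont_const]. apply cont_mult; [apply cont_const|].
    simpl. apply cont_mult; [apply cont_id|]. apply cont_mult; [apply cont_id|apply cont_const].
  - unfold IW, mv. apply (cont_fsum k (fun j t => MWm V W t i j * W (ct t) j)).
    intros j. apply cont_mult; auto. unfold MWm, msub, mscal.
    apply cont_minus; [apply cont_minus; [|apply cont_const]|apply cont_mult].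
    + apply (cont_F k k Lam V W a b); auto.
    + apply cont_mult; [apply cont_const|apply cont_ct].
    + apply cont_minus; [|apply cont_const]. apply (cont_F k k Ups V W a b); auto. Qed.


Lemma inR_mono V W a b a' b' : inR V W a b -> a <= a' -> b <= b' -> inR V W a' b'.
Proof. intros H Ha Hb y Hy. destruct (H y Hy). pose proof (exp_pos (- c * y / 2)). split; [lra|nra]. Qed.

Lemma n1_tri N (x y z : vec N) : n1 (vsub x z) <= n1 (vsub x y) + n1 (vsub y z).
Proof. unfold n1, vsub. rewrite <- fsum_plus. apply fsum_le. intros i.
  replace (x i - z i) with ((x i - y i) + (y i - z i)) by ring. apply Rabs_triang. Qed.

Lemma n1_le_const N (x : vec N) B : (forall i, Rabs (x i) <= B) -> n1 x <= INR N * B.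
Proof. intros H. unfold n1. rewrite <- fsum_const. apply fsum_le. auto. Qed.

Variables (aS bS lam : R).
Hypothesis HaS : 0 <= aS <= A0.
Hypothesis HbS : 0 <= bS <= B0.
Hypothesis Hlam : 1 <= lam.
Hypothesis Hinv1 : n1 (vsub Ue Ubar) + INR n * (2 * (Bp * bS) / c) <= aS.
Hypothesis Hinv2 : n1 Wbar + INR k * (2 * (mu * bS) / c) <= bS.
Definition kV := Bp / lam + Lc * (1 + 1 / lam) * B0.
Definition kW := mu / lam + (1 + delta) * Lc * (1 + 1 / lam) * B0.
Hypothesis Hk1 : INR n * (2 * kV / c) <= 1 / 2.
Hypothesis Hk2 : INR k * (2 * kW / c) <= 1 / (2 * lam).

Definition GP (V : R -> vec n) (W : R -> vec k) := inR V W aS bS /\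
  (forall j x, continuous (fun t => V (ct t) j) x) /\ (forall j x, continuous (fun t => W (ct t) j) x).

Lemma GP_ex V W : GP V W -> (forall i a b, ex_RInt (IV V W i) a b) /\ (forall i a b, ex_RInt (GW V W i) a b).
Proof. intros [H [CV CW]]. split; intros i a b; apply exRI; intros.
  - apply (cont_IV V W aS bS); auto; lra.
  - apply (cont_GW V W aS bS); auto; lra. Qed.

Lemma GP_step V W : GP V W -> GP (PhiV V W) (PhiW V W).
Proof. intros HG. pose proof (GP_ex V W HG) as [E1 E2]. destruct HG as [H [CV CW]]. split; [|split].
  - eapply inR_mono; [apply (Inv V W aS bS)|apply Hinv1|apply Hinv2]; auto.
  - intros j x. unfold PhiV. apply (continuous_comp ct (fun z => Ue j + RInt (IV V W j) T z)); [apply cont_ct|].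
    apply cont_plus; [apply cont_const|]. apply cont_RInt. intros; apply (cont_IV V W aS bS); auto; lra.
  - intros j x. unfold PhiW. apply (continuous_comp ct (fun z => Ew j z * (Wbar j + RInt (GW V W j) 0 z))); [apply cont_ct|].
    apply cont_mult; [|apply cont_plus; [apply cont_const|apply cont_RInt; intros; apply (cont_GW V W aS bS); auto; lra]].
    unfold Ew. apply cont_exp. apply cont_minus; [apply cont_mult; [apply cont_const|apply cont_id]|].
    unfold Rdiv. apply cont_mult; [|apply cont_const]. apply cont_mult; [apply cont_const|].
    simpl. apply cont_mult; [apply cont_id|]. apply cont_mult; [apply cont_id|apply cont_const]. Qed.

Fixpoint iter (p : nat) : (R -> vec n) * (R -> vec k) :=
  match p with
  | O => (fun _ => Ubar, fun _ => vzero k)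
  | S p' => (PhiV (fst (iter p')) (snd (iter p')), PhiW (fst (iter p')) (snd (iter p')))
  end.

Lemma GP_iter p : GP (fst (iter p)) (snd (iter p)).
Proof. induction p.
  - simpl. split; [|split; intros; apply cont_const].
    intros y Hy. unfold n1, vsub, vzero.
    rewrite (fsum_ext _ _ (fun _ => 0)) by (intros; rewrite Rminus_diag; apply Rabs_R0).
    rewrite (fsum_ext k _ (fun _ => 0)) by (intros; apply Rabs_R0).
    rewrite !fsum_zero. pose proof (exp_pos (- c * y / 2)). split; [lra|nra].
  - simpl. apply GP_step. auto. Qed.

Definition s0 := aS + lam * bS.

Lemma s0_pos : 0 <= s0.
Proof. unfold s0. nra. Qed.

Lemma Con' V W V' W' s : GP V W -> GP V' W' -> 0 <= s ->
  (forall y, 0 <= y <= T -> n1 (vsub (V y) (V' y)) <= s /\ n1 (vsub (W y) (W' y)) <= s / lam * exp (- c * y / 2)) ->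
  forall z, 0 <= z <= T ->
    n1 (vsub (PhiV V W z) (PhiV V' W' z)) <= s / 2 /\
    n1 (vsub (PhiW V W z) (PhiW V' W' z)) <= s / 2 / lam * exp (- c * z / 2).
Proof. intros HG HG' Hs Hd z Hz. pose proof (GP_ex V W HG) as [E1 E2]. pose proof (GP_ex V' W' HG') as [E1' E2'].
  destruct HG as [H _]. destruct HG' as [H' _].
  destruct (Con V W V' W' s lam) with (z := z) as [C1 C2]; auto.
  - eapply inR_mono; eauto; lra.
  - eapply inR_mono; eauto; lra.
  - fold kV in C1. fold kW in C2. split.
    + replace (INR n * (2 * (kV * s) / c)) with (INR n * (2 * kV / c) * s) in C1 by (field; lra).
      assert (INR n * (2 * kV / c) * s <= 1 / 2 * s) by (apply Rmult_le_compat_r; auto). lra.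
    + replace (INR k * (2 * (kW * s) / c)) with (INR k * (2 * kW / c) * s) in C2 by (field; lra).
      assert (INR k * (2 * kW / c) * s <= 1 / (2 * lam) * s) by (apply Rmult_le_compat_r; auto).
      pose proof (exp_pos (- c * z / 2)).
      replace (s / 2 / lam) with (1 / (2 * lam) * s) by (field; lra). nra. Qed.

Lemma diff_iter p : forall y, 0 <= y <= T ->
  n1 (vsub (fst (iter (S p)) y) (fst (iter p) y)) <= s0 * (/ 2) ^ p /\
  n1 (vsub (snd (iter (S p)) y) (snd (iter p) y)) <= s0 * (/ 2) ^ p / lam * exp (- c * y / 2).
Proof. induction p; intros y Hy.
  - destruct (GP_iter 1) as [H _]. destruct (H y Hy) as [H1 H2]. simpl in H1, H2 |- *.
    rewrite Rmult_1_r. unfold s0. split; [nra|].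
    rewrite n1_vsub_zero. pose proof (exp_pos (- c * y / 2)).
    replace ((aS + lam * bS) / lam) with (aS / lam + bS) by (field; lra).
    assert (0 <= aS / lam) by (unfold Rdiv; apply Rmult_le_pos; [lra|left; apply Rinv_0_lt_compat; lra]). nra.
  - change (iter (S (S p))) with (PhiV (fst (iter (S p))) (snd (iter (S p))), PhiW (fst (iter (S p))) (snd (iter (S p)))).
    change (iter (S p)) with (PhiV (fst (iter p)) (snd (iter p)), PhiW (fst (iter p)) (snd (iter p))) at 2.
    simpl fst; simpl snd.
    destruct (Con' _ _ _ _ (s0 * (/ 2) ^ p) (GP_iter (S p)) (GP_iter p)) with (z := y) as [C1 C2]; auto.
    + apply Rmult_le_pos; [apply s0_pos|apply pow_le; lra].
    + simpl pow. replace (s0 * (/ 2 * (/ 2) ^ p)) with (s0 * (/ 2) ^ p / 2) by field. auto. Qed.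

Definition Vl (y : R) : vec n := fun i => epsilon (inhabits 0) (fun l => Un_cv (fun p => fst (iter p) y i) l).
Definition Wl (y : R) : vec k := fun i => epsilon (inhabits 0) (fun l => Un_cv (fun p => snd (iter p) y i) l).

Lemma Vl_bound y i p : 0 <= y <= T -> Rabs (Vl y i - fst (iter p) y i) <= 2 * s0 * (/ 2) ^ p.
Proof. intros Hy. destruct (geo_cv (fun p => fst (iter p) y i) s0 s0_pos) as [l [Hl Hb]].
  - intros q. eapply Rle_trans; [apply (abs_le_n1 _ (vsub (fst (iter (S q)) y) (fst (iter q) y)))|].
    apply diff_iter; auto.
  - assert (Vl y i = l) as ->; auto. unfold Vl.
    pose proof (epsilon_spec (inhabits 0) (fun l => Un_cv (fun p => fst (iter p) y i) l) (ex_intro _ l Hl)).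
    eapply UL_sequence; eauto. Qed.

Lemma Wl_bound y i p : 0 <= y <= T -> Rabs (Wl y i - snd (iter p) y i) <= 2 * (s0 / lam * exp (- c * y / 2)) * (/ 2) ^ p.
Proof. intros Hy. assert (HC : 0 <= s0 / lam * exp (- c * y / 2)).
  { apply Rmult_le_pos; [|left; apply exp_pos]. unfold Rdiv. apply Rmult_le_pos; [apply s0_pos|left; apply Rinv_0_lt_compat; lra]. }
  destruct (geo_cv (fun p => snd (iter p) y i) _ HC) as [l [Hl Hb]].
  - intros q. eapply Rle_trans; [apply (abs_le_n1 _ (vsub (snd (iter (S q)) y) (snd (iter q) y)))|].
    eapply Rle_trans; [apply diff_iter; auto|]. right. field. lra.
  - assert (Wl y i = l) as ->; auto. unfold Wl.
    pose proof (epsilon_spec (inhabits 0) (fun l => Un_cv (fun p => snd (iter p) y i) l) (ex_intro _ l Hl)).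
    eapply UL_sequence; eauto. Qed.


Lemma pow_half_nonneg p : 0 <= (/ 2) ^ p.
Proof. apply pow_le; lra. Qed.

Lemma pow_half_S p : (/ 2) ^ S p <= (/ 2) ^ p.
Proof. simpl. pose proof (pow_half_nonneg p). lra. Qed.

Lemma lam_inv : 0 < / lam <= 1.
Proof. split; [apply Rinv_0_lt_compat; lra|]. rewrite <- Rinv_1. apply Rinv_le_contravar; lra. Qed.

Lemma Vl_n1 y p : 0 <= y <= T -> n1 (vsub (Vl y) (fst (iter p) y)) <= INR n * (2 * s0 * (/ 2) ^ p).
Proof. intros Hy. apply n1_le_const. intros i. apply Vl_bound; auto. Qed.

Lemma Wl_n1 y p : 0 <= y <= T -> n1 (vsub (Wl y) (snd (iter p) y)) <= INR k * (2 * (s0 / lam * exp (- c * y / 2)) * (/ 2) ^ p).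
Proof. intros Hy. apply n1_le_const. intros i. apply Wl_bound; auto. Qed.

Lemma lim_GP : GP Vl Wl.
Proof. pose proof s0_pos as Hs0. pose proof lam_inv as Hli. split; [|split].
  - intros y Hy. split.
    + apply Rle_plus_epsilon. intros e He. destruct (half_small (INR n * (2 * s0)) ltac:(pose proof (pos_INR n); nra) e He) as [p Hp].
      eapply Rle_trans; [apply (n1_tri _ _ (fst (iter p) y))|].
      pose proof (Vl_n1 y p Hy). destruct (GP_iter p) as [HGi _]. destruct (HGi y Hy). lra.
    + apply Rle_plus_epsilon. intros e He. destruct (half_small (INR k * (2 * s0)) ltac:(pose proof (pos_INR k); nra) e He) as [p Hp].
      rewrite <- n1_vsub_zero. eapply Rle_trans; [apply (n1_tri _ _ (snd (iter p) y))|].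
      pose proof (Wl_n1 y p Hy). destruct (GP_iter p) as [HGi _]. destruct (HGi y Hy). rewrite n1_vsub_zero.
      pose proof (exp_c_le1 y ltac:(lra)). pose proof (exp_pos (- c * y / 2)). pose proof (pow_half_nonneg p).
      pose proof (pos_INR k).
      assert (INR k * (2 * (s0 / lam * exp (- c * y / 2)) * (/ 2) ^ p) <= INR k * (2 * s0) * (/ 2) ^ p).
      { replace (INR k * (2 * (s0 / lam * exp (- c * y / 2)) * (/ 2) ^ p)) with
          (INR k * (2 * s0) * (/ 2) ^ p * (/ lam * exp (- c * y / 2))) by (unfold Rdiv; ring).
        rewrite <- (Rmult_1_r (INR k * (2 * s0) * (/ 2) ^ p)) at 2.
        apply Rmult_le_compat_l; [apply Rmult_le_pos; [apply Rmult_le_pos|]; lra|].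
        rewrite <- (Rmult_1_r 1). apply Rmult_le_compat; lra. }
      lra.
  - intros j x. apply (cont_unif (fun p t => fst (iter p) (ct t) j) _ (fun p => 2 * s0 * (/ 2) ^ p)).
    + intros p. destruct (GP_iter p) as [_ [C _]]. apply C.
    + intros p t. apply Vl_bound. apply cl_in. left; apply HTpos.
    + apply half_small. lra.
  - intros j x. apply (cont_unif (fun p t => snd (iter p) (ct t) j) _ (fun p => 2 * s0 * (/ 2) ^ p)).
    + intros p. destruct (GP_iter p) as [_ [_ C]]. apply C.
    + intros p t. eapply Rle_trans; [apply Wl_bound; apply cl_in; left; apply HTpos|].
      pose proof (exp_c_le1 (ct t) ltac:(pose proof (cl_in T t (Rlt_le _ _ HTpos)); unfold ct; lra)).
      pose proof (exp_pos (- c * ct t / 2)). pose proof (pow_half_nonneg p).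
      replace (2 * (s0 / lam * exp (- c * ct t / 2)) * (/ 2) ^ p) with
          (2 * s0 * (/ 2) ^ p * (/ lam * exp (- c * ct t / 2))) by (unfold Rdiv; ring).
      rewrite <- (Rmult_1_r (2 * s0 * (/ 2) ^ p)) at 2.
      apply Rmult_le_compat_l; [apply Rmult_le_pos; [apply Rmult_le_pos|]; lra|].
      rewrite <- (Rmult_1_r 1). apply Rmult_le_compat; lra.
    + apply half_small. lra. Qed.

Lemma lim_fix z : 0 <= z <= T -> (forall i, Vl z i = PhiV Vl Wl z i) /\ (forall j, Wl z j = PhiW Vl Wl z j).
Proof. intros Hz. pose proof s0_pos as Hs0. pose proof lam_inv as Hli.
  set (K := 2 * s0 + (INR n + INR k + 1) * s0).
  assert (HK : 0 <= K) by (unfold K; pose proof (pos_INR n); pose proof (pos_INR k); nra).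
  assert (Main : forall p, n1 (vsub (PhiV Vl Wl z) (PhiV (fst (iter p)) (snd (iter p)) z)) <= (INR n + INR k + 1) * (2 * s0 * (/ 2) ^ p) / 2 /\
     n1 (vsub (PhiW Vl Wl z) (PhiW (fst (iter p)) (snd (iter p)) z)) <= (INR n + INR k + 1) * (2 * s0 * (/ 2) ^ p) / 2 / lam * exp (- c * z / 2)).
  { intros p. apply Con'; auto. apply lim_GP. apply GP_iter.
    - pose proof (pow_half_nonneg p). pose proof (pos_INR n); pose proof (pos_INR k). apply Rmult_le_pos; nra.
    - intros y Hy. pose proof (Vl_n1 y p Hy). pose proof (Wl_n1 y p Hy).
      pose proof (pow_half_nonneg p). pose proof (pos_INR n); pose proof (pos_INR k).
      pose proof (exp_pos (- c * y / 2)). split.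
      + assert (INR n * (2 * s0 * (/ 2) ^ p) <= (INR n + INR k + 1) * (2 * s0 * (/ 2) ^ p)) by (apply Rmult_le_compat_r; [|lra]; nra). lra.
      + eapply Rle_trans; [apply H0|].
        replace (INR k * (2 * (s0 / lam * exp (- c * y / 2)) * (/ 2) ^ p)) with
          (INR k * (2 * s0 * (/ 2) ^ p) * (/ lam * exp (- c * y / 2))) by (unfold Rdiv; ring).
        replace ((INR n + INR k + 1) * (2 * s0 * (/ 2) ^ p) / lam * exp (- c * y / 2)) with
          ((INR n + INR k + 1) * (2 * s0 * (/ 2) ^ p) * (/ lam * exp (- c * y / 2))) by (unfold Rdiv; ring).
        apply Rmult_le_compat_r; [apply Rmult_le_pos; lra|]. apply Rmult_le_compat_r; [|lra]. nra. }
  assert (Hq : forall p, (INR n + INR k + 1) * (2 * s0 * (/ 2) ^ p) / 2 = (INR n + INR k + 1) * s0 * (/ 2) ^ p) by (intros; field).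
  pose proof (pos_INR n); pose proof (pos_INR k).
  split.
  - intros i. apply Rminus_diag_uniq. apply le_eps_0. intros e He. destruct (half_small K HK e He) as [p Hp].
    destruct (Main p) as [M1 _]. pose proof (pow_half_nonneg p). pose proof (pow_half_S p).
    pose proof (Vl_bound z i (S p) Hz) as B1. simpl fst in B1.
    assert (A1 : Rabs (PhiV Vl Wl z i - PhiV (fst (iter p)) (snd (iter p)) z i) <= n1 (vsub (PhiV Vl Wl z) (PhiV (fst (iter p)) (snd (iter p)) z)))
      by apply (abs_le_n1 _ (vsub (PhiV Vl Wl z) (PhiV (fst (iter p)) (snd (iter p)) z)) i).
    rewrite Hq in M1.
    replace (Vl z i - PhiV Vl Wl z i) with ((Vl z i - PhiV (fst (iter p)) (snd (iter p)) z i) - (PhiV Vl Wl z i - PhiV (fst (iter p)) (snd (iter p)) z i)) by ring.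
    eapply Rle_trans; [apply Rabs_triang|]. rewrite Rabs_Ropp. unfold K in Hp.
    assert (2 * s0 * (/ 2) ^ S p <= 2 * s0 * (/ 2) ^ p) by (apply Rmult_le_compat_l; lra). nra.
  - intros i. apply Rminus_diag_uniq. apply le_eps_0. intros e He. destruct (half_small K HK e He) as [p Hp].
    destruct (Main p) as [_ M2]. pose proof (pow_half_nonneg p). pose proof (pow_half_S p).
    pose proof (Wl_bound z i (S p) Hz) as B2. simpl snd in B2.
    assert (A2 : Rabs (PhiW Vl Wl z i - PhiW (fst (iter p)) (snd (iter p)) z i) <= n1 (vsub (PhiW Vl Wl z) (PhiW (fst (iter p)) (snd (iter p)) z)))
      by apply (abs_le_n1 _ (vsub (PhiW Vl Wl z) (PhiW (fst (iter p)) (snd (iter p)) z)) i).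
    rewrite Hq in M2.
    pose proof (exp_c_le1 z ltac:(lra)). pose proof (exp_pos (- c * z / 2)).
    set (q := (/ 2) ^ p) in *. set (ee := exp (- c * z / 2)) in *.
    replace (Wl z i - PhiW Vl Wl z i) with ((Wl z i - PhiW (fst (iter p)) (snd (iter p)) z i) - (PhiW Vl Wl z i - PhiW (fst (iter p)) (snd (iter p)) z i)) by ring.
    eapply Rle_trans; [apply Rabs_triang|]. rewrite Rabs_Ropp. unfold K in Hp.
    assert (X1 : 2 * (s0 / lam * ee) * (/ 2) ^ S p <= 2 * s0 * q).
    { replace (2 * (s0 / lam * ee) * (/ 2) ^ S p) with (2 * s0 * (/ 2) ^ S p * (/ lam * ee)) by (unfold Rdiv; ring).
      pose proof (pow_half_nonneg (S p)).
      assert (0 <= / lam * ee <= 1) by (split; [apply Rmult_le_pos; lra|nra]).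
      apply Rle_trans with (2 * s0 * (/ 2) ^ S p).
      - rewrite <- (Rmult_1_r (2 * s0 * (/ 2) ^ S p)) at 2. apply Rmult_le_compat_l; [nra|lra].
      - apply Rmult_le_compat_l; nra. }
    assert (X2 : (INR n + INR k + 1) * s0 * q / lam * ee <= (INR n + INR k + 1) * s0 * q).
    { replace ((INR n + INR k + 1) * s0 * q / lam * ee) with ((INR n + INR k + 1) * s0 * q * (/ lam * ee)) by (unfold Rdiv; ring).
      rewrite <- (Rmult_1_r ((INR n + INR k + 1) * s0 * q)) at 2. apply Rmult_le_compat_l; [|nra].
      apply Rmult_le_pos; [apply Rmult_le_pos|]; nra. }
    nra.
Qed.


Lemma Con2 V W V' W' s : inR V W A0 B0 -> inR V' W' A0 B0 -> 0 <= s ->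
  (forall i z, 0 <= z <= T -> ex_RInt (IV V W i) z T) ->
  (forall i z, 0 <= z <= T -> ex_RInt (GW V W i) 0 z) ->
  (forall i z, 0 <= z <= T -> ex_RInt (IV V' W' i) z T) ->
  (forall i z, 0 <= z <= T -> ex_RInt (GW V' W' i) 0 z) ->
  (forall y, 0 <= y <= T -> n1 (vsub (V y) (V' y)) <= s /\ n1 (vsub (W y) (W' y)) <= s / lam * exp (- c * y / 2)) ->
  forall z, 0 <= z <= T ->
    n1 (vsub (PhiV V W z) (PhiV V' W' z)) <= s / 2 /\
    n1 (vsub (PhiW V W z) (PhiW V' W' z)) <= s / 2 / lam * exp (- c * z / 2).
Proof. intros H H' Hs E1 E2 E1' E2' Hd z Hz.
  destruct (Con V W V' W' s lam) with (z := z) as [C1 C2]; auto.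
  fold kV in C1. fold kW in C2. split.
  + replace (INR n * (2 * (kV * s) / c)) with (INR n * (2 * kV / c) * s) in C1 by (field; lra).
    assert (INR n * (2 * kV / c) * s <= 1 / 2 * s) by (apply Rmult_le_compat_r; auto). lra.
  + replace (INR k * (2 * (kW * s) / c)) with (INR k * (2 * kW / c) * s) in C2 by (field; lra).
    assert (INR k * (2 * kW / c) * s <= 1 / (2 * lam) * s) by (apply Rmult_le_compat_r; auto).
    pose proof (exp_pos (- c * z / 2)).
    replace (s / 2 / lam) with (1 / (2 * lam) * s) by (field; lra). nra. Qed.

Lemma uniq V W V' W' : inR V W A0 B0 -> inR V' W' A0 B0 ->
  (forall i z, 0 <= z <= T -> ex_RInt (IV V W i) z T) ->
  (forall i z, 0 <= z <= T -> ex_RInt (GW V W i) 0 z) ->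
  (forall i z, 0 <= z <= T -> ex_RInt (IV V' W' i) z T) ->
  (forall i z, 0 <= z <= T -> ex_RInt (GW V' W' i) 0 z) ->
  (forall z, 0 <= z <= T -> (forall i, V z i = PhiV V W z i) /\ (forall j, W z j = PhiW V W z j)) ->
  (forall z, 0 <= z <= T -> (forall i, V' z i = PhiV V' W' z i) /\ (forall j, W' z j = PhiW V' W' z j)) ->
  forall z, 0 <= z <= T -> (forall i, V' z i = V z i) /\ (forall j, W' z j = W z j).
Proof. intros H H' E1 E2 E1' E2' F F' z Hz.
  pose proof lam_inv as Hli.
  set (su := 2 * A0 + 2 * lam * B0).
  assert (Hsu : 0 <= su) by (unfold su; nra).
  assert (D : forall p y, 0 <= y <= T -> n1 (vsub (V y) (V' y)) <= su * (/ 2) ^ p /\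
     n1 (vsub (W y) (W' y)) <= su * (/ 2) ^ p / lam * exp (- c * y / 2)).
  { induction p; intros y Hy.
    - simpl. rewrite Rmult_1_r. destruct (H y Hy) as [H1 H2]. destruct (H' y Hy) as [H1' H2']. split.
      + eapply Rle_trans; [apply (n1_tri _ _ Ubar)|]. rewrite (n1_vsub_sym _ Ubar). unfold su. nra.
      + eapply Rle_trans; [apply (n1_tri _ _ (vzero k))|]. rewrite (n1_vsub_sym _ (vzero k)), !n1_vsub_zero.
        pose proof (exp_pos (- c * y / 2)).
        replace (su / lam) with (2 * A0 / lam + 2 * B0) by (unfold su; field; lra).
        assert (0 <= 2 * A0 / lam) by (unfold Rdiv; apply Rmult_le_pos; lra). nra.
    - assert (EV : n1 (vsub (V y) (V' y)) = n1 (vsub (PhiV V W y) (PhiV V' W' y))).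
      { unfold n1, vsub. apply fsum_ext. intros i. destruct (F y Hy) as [A _]. destruct (F' y Hy) as [A' _]. rewrite A, A'. auto. }
      assert (EW : n1 (vsub (W y) (W' y)) = n1 (vsub (PhiW V W y) (PhiW V' W' y))).
      { unfold n1, vsub. apply fsum_ext. intros i. destruct (F y Hy) as [_ A]. destruct (F' y Hy) as [_ A']. rewrite A, A'. auto. }
      rewrite EV, EW.
      replace (su * (/ 2) ^ S p) with (su * (/ 2) ^ p / 2) by (simpl; field).
      apply Con2; auto. apply Rmult_le_pos; [lra|apply pow_half_nonneg]. }
  split.
  - intros i. apply Rminus_diag_uniq. apply le_eps_0. intros e He.
    destruct (half_small su Hsu e He) as [p Hp]. destruct (D p z Hz) as [D1 _].
    assert (A1 : Rabs (V z i - V' z i) <= n1 (vsub (V z) (V' z))) by apply (abs_le_n1 _ (vsub (V z) (V' z)) i).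
    rewrite <- Rabs_Ropp. replace (- (V' z i - V z i)) with (V z i - V' z i) by ring. lra.
  - intros i. apply Rminus_diag_uniq. apply le_eps_0. intros e He.
    destruct (half_small su Hsu e He) as [p Hp]. destruct (D p z Hz) as [_ D2].
    assert (A1 : Rabs (W z i - W' z i) <= n1 (vsub (W z) (W' z))) by apply (abs_le_n1 _ (vsub (W z) (W' z)) i).
    rewrite <- Rabs_Ropp. replace (- (W' z i - W z i)) with (W z i - W' z i) by ring.
    pose proof (exp_c_le1 z ltac:(lra)). pose proof (exp_pos (- c * z / 2)). pose proof (pow_half_nonneg p).
    assert (su * (/ 2) ^ p / lam * exp (- c * z / 2) <= su * (/ 2) ^ p).
    { replace (su * (/ 2) ^ p / lam * exp (- c * z / 2)) with (su * (/ 2) ^ p * (/ lam * exp (- c * z / 2))) by (unfold Rdiv; ring).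
      rewrite <- (Rmult_1_r (su * (/ 2) ^ p)) at 2. apply Rmult_le_compat_l; [nra|nra]. }
    lra. Qed.


Lemma ET : delta / eps = T.
Proof. rewrite <- HT. field. lra. Qed.

Definition stV (V : R -> vec n) (W : R -> vec k) i := fun y => mv (Psi (V y) (W y) (eps * y) eps) (W y) i.
Definition stW (V : R -> vec n) (W : R -> vec k) (z : R) i := fun y =>
  mv (mexp (madd (mscal (z - y) (Lam Ubar (vzero k) 0 0))
                 (mscal (- (eps * z ^ 2 / 2) + eps * y ^ 2 / 2) (mid k))))
     (mv (msub (msub (Lam (V y) (W y) (eps * y) eps) (Lam Ubar (vzero k) 0 0))
               (mscal (eps * y) (msub (Ups (V y) (W y) (eps * y) eps) (mid k))))
         (W y)) i.

Lemma stV_eq V W i y : 0 <= y <= T -> stV V W i y = IV V W i y.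
Proof. intros Hy. unfold stV, IV. rewrite ct_id; auto. Qed.

Lemma stW_eq V W z i y : 0 <= y <= T -> stW V W z i y = Ew i z * GW V W i y.
Proof. intros Hy. unfold stW, GW, IW, MWm, Ew. rewrite ct_id by auto. rewrite HLam0.
  rewrite diag_add, mexp_diag, mv_diag. rewrite <- Rmult_assoc, <- exp_plus. f_equal. f_equal. ring. Qed.

Lemma Wbar_eq z i : mv (mexp (msub (mscal z (Lam Ubar (vzero k) 0 0)) (mscal (eps * z ^ 2 / 2) (mid k)))) Wbar i = Ew i z * Wbar i.
Proof. rewrite HLam0, diag_sub, mexp_diag, mv_diag. unfold Ew. f_equal. f_equal. ring. Qed.

Lemma RInt_eq_of (f : R -> R) a b : ex_RInt f a b -> RInt_eq f a b (RInt f a b).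
Proof. intros H. exists (ex_RInt_Reals_0 f a b H). symmetry. apply RInt_Reals. Qed.

Lemma RInt_eq_to (f : R -> R) a b I : RInt_eq f a b I -> ex_RInt f a b /\ RInt f a b = I.
Proof. intros [pr E]. split. apply ex_RInt_Reals_1; auto. rewrite <- E. apply RInt_Reals. Qed.

Lemma good_to_fix cV cW V W : 0 <= cV -> 0 <= cW -> INR n * (cV * delta) <= A0 -> INR k * (cW * delta) <= B0 ->
  good_solution Psi Lam Ups Ubar Ue Wbar c delta eps cV cW V W ->
  inR V W A0 B0 /\
  (forall i z, 0 <= z <= T -> ex_RInt (IV V W i) z T) /\
  (forall i z, 0 <= z <= T -> ex_RInt (GW V W i) 0 z) /\
  (forall z, 0 <= z <= T -> (forall i, V z i = PhiV V W z i) /\ (forall j, W z j = PhiW V W z j)).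
Proof. intros HcV HcW H1 H2 [_ [_ [GV [GW' GB]]]]. rewrite ET in GV, GW', GB.
  assert (EV : forall i z, 0 <= z <= T -> ex_RInt (IV V W i) z T /\ RInt (IV V W i) T z = V z i - Ue i).
  { intros i z Hz. destruct (GV z Hz i) as [I [HI E]]. apply RInt_eq_to in HI. destruct HI as [HI1 HI2].
    assert (X : ex_RInt (IV V W i) T z).
    { apply (ex_RInt_ext (stV V W i)); auto. intros y Hy. apply stV_eq. unfold Rmin, Rmax in Hy; destruct Rle_dec; lra. }
    split. apply ex_RInt_swap; auto.
    rewrite <- (RInt_ext (stV V W i)). unfold stV. rewrite HI2; lra.
    intros y Hy. apply stV_eq. unfold Rmin, Rmax in Hy; destruct Rle_dec; lra. }
  assert (EW : forall i z, 0 <= z <= T -> ex_RInt (GW V W i) 0 z /\ Ew i z * RInt (GW V W i) 0 z = W z i - Ew i z * Wbar i).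
  { intros i z Hz. destruct (GW' z Hz i) as [I [HI E]]. apply RInt_eq_to in HI. destruct HI as [HI1 HI2].
    rewrite Wbar_eq in E. pose proof (Ew_pos i z).
    assert (X : ex_RInt (GW V W i) 0 z).
    { apply (ex_RInt_ext (fun y => / Ew i z * stW V W z i y)).
      - intros y Hy. rewrite stW_eq by (unfold Rmin, Rmax in Hy; destruct Rle_dec; lra).
        rewrite <- Rmult_assoc, Rinv_l, Rmult_1_l; [reflexivity|]. apply Rgt_not_eq. auto.
      - apply (ex_RInt_scal (stW V W z i)); auto. }
    split; auto.
    assert (ES : Ew i z * RInt (GW V W i) 0 z = RInt (fun y => Ew i z * GW V W i y) 0 z)
      by (symmetry; apply (RInt_scal (GW V W i) 0 z (Ew i z) X)).
    rewrite ES.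
    rewrite <- (RInt_ext (stW V W z i)). unfold stW. rewrite HI2; lra.
    intros y Hy. rewrite stW_eq. auto. unfold Rmin, Rmax in Hy; destruct Rle_dec; lra. }
  split; [|split; [|split]].
  - intros y Hy. destruct (GB y Hy) as [B1 B2].
    pose proof (n1_le_vnorm _ (vsub (V y) Ubar)). pose proof (n1_le_vnorm _ (W y)).
    pose proof (pos_INR n). pose proof (pos_INR k). pose proof (exp_pos (- c * y / 2)). split.
    + assert (INR n * vnorm (vsub (V y) Ubar) <= INR n * (cV * delta)) by (apply Rmult_le_compat_l; auto). lra.
    + assert (INR k * vnorm (W y) <= INR k * (cW * exp (- c * y / 2) * delta)) by (apply Rmult_le_compat_l; auto).
      assert (INR k * (cW * exp (- c * y / 2) * delta) = INR k * (cW * delta) * exp (- c * y / 2)) by ring.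
      assert (INR k * (cW * delta) * exp (- c * y / 2) <= B0 * exp (- c * y / 2)) by (apply Rmult_le_compat_r; lra).
      lra.
  - intros i z Hz. apply EV; auto.
  - intros i z Hz. apply EW; auto.
  - intros z Hz. split; intros i.
    + unfold PhiV. destruct (EV i z Hz) as [_ E]. rewrite E. ring.
    + unfold PhiW. destruct (EW i z Hz) as [_ E]. rewrite Rmult_plus_distr_l. rewrite E. ring.
Qed.


Lemma package cV cW : 0 <= cV -> 0 <= cW -> INR n * (cV * delta) <= A0 -> INR k * (cW * delta) <= B0 ->
  aS <= cV * delta -> bS <= cW * delta ->
  exists (V : R -> vec n) (W : R -> vec k),
    good_solution Psi Lam Ups Ubar Ue Wbar c delta eps cV cW V W /\
    forall (V' : R -> vec n) (W' : R -> vec k),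
      good_solution Psi Lam Ups Ubar Ue Wbar c delta eps cV cW V' W' ->
      forall z, 0 <= z <= delta / eps ->
        (forall i, V' z i = V z i) /\ (forall j, W' z j = W z j).
Proof. intros HcV HcW H1 H2 H3 H4. pose proof lim_GP as G. pose proof (GP_ex _ _ G) as [EX1 EX2].
  pose proof lim_fix as F. destruct G as [GI [GCV GCW]].
  exists Vl, Wl. split.
  - unfold good_solution. cbv zeta. rewrite ET. split; [|split; [|split; [|split]]].
    + intros i. apply (cont_int_of (fun y => Vl y i) (fun t => Vl (ct t) i) T); [apply GCV|].
      intros y Hy. rewrite ct_id; auto.
    + intros i. apply (cont_int_of (fun y => Wl y i) (fun t => Wl (ct t) i) T); [apply GCW|].
      intros y Hy. rewrite ct_id; auto.
    + intros z Hz i. exists (RInt (IV Vl Wl i) T z). split.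
      * rewrite (RInt_ext (IV Vl Wl i) (stV Vl Wl i)).
        2:{ intros y Hy. symmetry. apply stV_eq. unfold Rmin, Rmax in Hy; destruct Rle_dec; lra. }
        apply RInt_eq_of. apply (ex_RInt_ext (IV Vl Wl i)); auto.
        intros y Hy. symmetry. apply stV_eq. unfold Rmin, Rmax in Hy; destruct Rle_dec; lra.
      * destruct (F z Hz) as [FV _]. rewrite FV. reflexivity.
    + intros z Hz i. exists (Ew i z * RInt (GW Vl Wl i) 0 z). split.
      * assert (ES : Ew i z * RInt (GW Vl Wl i) 0 z = RInt (fun y => Ew i z * GW Vl Wl i y) 0 z)
          by (symmetry; apply (RInt_scal (GW Vl Wl i) 0 z (Ew i z) (EX2 i 0 z))).
        rewrite ES. rewrite (RInt_ext _ (stW Vl Wl z i)).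
        2:{ intros y Hy. symmetry. apply stW_eq. unfold Rmin, Rmax in Hy; destruct Rle_dec; lra. }
        apply RInt_eq_of. apply (ex_RInt_ext (fun y => Ew i z * GW Vl Wl i y)).
        { intros y Hy. symmetry. apply stW_eq. unfold Rmin, Rmax in Hy; destruct Rle_dec; lra. }
        apply (ex_RInt_scal (GW Vl Wl i) 0 z (Ew i z) (EX2 i 0 z)).
      * rewrite Wbar_eq. destruct (F z Hz) as [_ FW]. rewrite FW. unfold PhiW. ring.
    + intros z Hz. destruct (GI z Hz) as [B1 B2].
      pose proof (vnorm_le_n1 _ (vsub (Vl z) Ubar)). pose proof (vnorm_le_n1 _ (Wl z)).
      pose proof (exp_pos (- c * z / 2)). split; [lra|].
      assert (bS * exp (- c * z / 2) <= cW * delta * exp (- c * z / 2)) by (apply Rmult_le_compat_r; lra). nra.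
  - intros V' W' HG z Hz. rewrite ET in Hz.
    destruct (good_to_fix cV cW V' W') as [R1 [R2 [R3 R4]]]; auto.
    apply (uniq Vl Wl V' W'); auto.
    + eapply inR_mono; [exact GI|lra|lra].
Qed.

End Core.


Lemma div_le a X Y : 0 < Y -> a <= X / Y -> a * Y <= X.
Proof. intros HY H. apply (Rmult_le_compat_r Y) in H; [|lra]. replace (X / Y * Y) with X in H by (field; lra). auto. Qed.

Theorem lemma3p2
  (k m : nat) (Hk : (1 <= k)%nat) (Hm : (1 <= m)%nat)
  (A : vec (k + m) -> mat (k + m) (k + m))
  (lam : Fin.t (k + m) -> vec (k + m) -> R) (c : R)
  (Psi : vec (k + m) -> vec k -> R -> R -> mat (k + m) k)
  (Lam Ups : vec (k + m) -> vec k -> R -> R -> mat k k)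
  (Ubar : vec (k + m)) (Ueps : R -> vec (k + m))
  (HA : forall i j, smooth_on (fun _ => True) (fun U => A U i j))
  (Heig : forall i U, exists r : vec (k + m), r <> vzero (k + m) /\
            mv (A U) r = (fun l => lam i U * r l))
  (Hord : forall i j U, (proj1_sig (Fin.to_nat i) < proj1_sig (Fin.to_nat j))%nat ->
            lam i U < lam j U)
  (Hc : 0 < c)
  (Hneg : forall i U, (proj1_sig (Fin.to_nat i) < k)%nat -> lam i U < - c)
  (Hpos : forall i U, (k <= proj1_sig (Fin.to_nat i))%nat -> c < lam i U)
  (Hsm : exists d0, 0 < d0 /\ smooth_coef (box Ubar d0) Psi /\
            smooth_coef (box Ubar d0) Lam /\ smooth_coef (box Ubar d0) Ups)
  (HLam0 : Lam Ubar (vzero k) 0 0 = mdiag (fun i => lam (Fin.L m i) Ubar))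
  (HUps0 : Ups Ubar (vzero k) 0 0 = mid k)
  (HUeps : forall eta, 0 < eta -> exists e1, 0 < e1 /\
            forall eps, 0 < eps < e1 -> vnorm (vsub (Ueps eps) Ubar) < eta) :
  exists dstar, 0 < dstar /\
  forall delta, 0 < delta <= dstar ->
  exists cV theta cW, (0 < cV < 1) /\ (0 < theta < 1) /\ (0 < cW < 1) /\
  exists eps0, 0 < eps0 /\
  forall eps, 0 < eps < eps0 ->
  forall Wbar : vec k, vnorm Wbar <= theta * delta ->
  exists (V : R -> vec (k + m)) (W : R -> vec k),
    good_solution Psi Lam Ups Ubar (Ueps eps) Wbar c delta eps cV cW V W /\
    forall (V' : R -> vec (k + m)) (W' : R -> vec k),
      good_solution Psi Lam Ups Ubar (Ueps eps) Wbar c delta eps cV cW V' W' ->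
      forall z, 0 <= z <= delta / eps ->
        (forall i, V' z i = V z i) /\ (forall j, W' z j = W z j).
Proof.
  destruct Hsm as [d0 [Hd0 [SP [SL SU]]]].
  destruct (lipM _ _ _ _ Ubar d0 Psi Hd0 SP) as [r1 [L1 [Hr1 [HL1 LP]]]].
  destruct (lipM _ _ _ _ Ubar d0 Lam Hd0 SL) as [r2 [L2 [Hr2 [HL2 LL]]]].
  destruct (lipM _ _ _ _ Ubar d0 Ups Hd0 SU) as [r3 [L3 [Hr3 [HL3 LU]]]].
  destruct (entry_bound _ _ (Psi Ubar (vzero k) 0 0)) as [B0p [HB0p HB0pb]].
  set (rho := Rmin r1 (Rmin r2 r3)).
  assert (Hrho : 0 < rho /\ rho <= r1 /\ rho <= r2 /\ rho <= r3).
  { unfold rho. pose proof (Rmin_l r1 (Rmin r2 r3)). pose proof (Rmin_r r1 (Rmin r2 r3)).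
    pose proof (Rmin_l r2 r3). pose proof (Rmin_r r2 r3).
    split; [apply Rmin_glb_lt; auto; apply Rmin_glb_lt; auto|lra]. }
  set (Lc := L1 + L2 + L3).
  set (Bp := B0p + Lc * rho).
  set (lb := fun i : Fin.t k => lam (Fin.L m i) Ubar).
  assert (Hlb : forall i, lb i <= - c).
  { intros i. left. apply Hneg. rewrite Fin.L_sanity. destruct (Fin.to_nat i); simpl; auto. }
  set (NN := INR (k + m)). set (KK := INR k).
  assert (HNN : 1 <= NN) by (unfold NN; apply (le_INR 1); lia).
  assert (HKK : 1 <= KK) by (unfold KK; apply (le_INR 1); lia).
  assert (HLc : 0 <= Lc) by (unfold Lc; lra).
  assert (HBp : 0 <= Bp) by (unfold Bp; pose proof (Rmult_le_pos Lc rho HLc (Rlt_le _ _ (proj1 Hrho))); lra).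
  set (Lc' := Lc + 1). set (Bp' := Bp + 1).
  set (lam0 := 8 * NN * Bp' / c + 1).
  assert (Hlam0 : 1 <= lam0).
  { unfold lam0. assert (0 <= 8 * NN * Bp' / c) by (unfold Rdiv, Bp'; apply Rmult_le_pos; [nra|left; apply Rinv_0_lt_compat; lra]). lra. }
  set (cV := 1 / 2).
  set (cW := Rmin (1 / 2) (c / (8 * NN * Bp'))).
  assert (HcW : 0 < cW <= 1 / 2 /\ cW <= c / (8 * NN * Bp')).
  { unfold cW. split; [split|]; [apply Rmin_glb_lt; [lra|unfold Rdiv; apply Rmult_lt_0_compat; [lra|apply Rinv_0_lt_compat; unfold Bp'; nra]]|apply Rmin_l|apply Rmin_r]. }
  set (theta := cW / (2 * KK)).
  set (S := NN + KK + 2).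
  set (d1 := rho / S).
  set (d2 := c / (8 * KK * Lc' * S)).
  set (d3 := c / (16 * NN * KK * Lc')).
  set (d4 := c / (4 * lam0 * KK * Lc' * (2 * S + 4 * KK))).
  assert (HS : 0 < S) by (unfold S; lra).
  assert (HLc' : 1 <= Lc') by (unfold Lc'; lra).
  assert (Hd1 : 0 < d1) by (unfold d1; apply Rdiv_lt_0_compat; lra).
  assert (Hd2 : 0 < d2) by (unfold d2; apply Rdiv_lt_0_compat; [lra|]; repeat apply Rmult_lt_0_compat; lra).
  assert (Hd3 : 0 < d3) by (unfold d3; apply Rdiv_lt_0_compat; [lra|]; apply Rmult_lt_0_compat; [|lra]; apply Rmult_lt_0_compat; lra).
  assert (Hd4 : 0 < d4) by (unfold d4; apply Rdiv_lt_0_compat; [lra|]; repeat apply Rmult_lt_0_compat; lra).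
  exists (Rmin 1 (Rmin d1 (Rmin d2 (Rmin d3 d4)))). split.
  { apply Rmin_glb_lt; [lra|]. repeat apply Rmin_glb_lt; auto. }
  intros delta [Hdel Hdst].
  assert (Hdd : delta <= 1 /\ delta <= d1 /\ delta <= d2 /\ delta <= d3 /\ delta <= d4).
  { pose proof (Rmin_l 1 (Rmin d1 (Rmin d2 (Rmin d3 d4)))). pose proof (Rmin_r 1 (Rmin d1 (Rmin d2 (Rmin d3 d4)))).
    pose proof (Rmin_l d1 (Rmin d2 (Rmin d3 d4))). pose proof (Rmin_r d1 (Rmin d2 (Rmin d3 d4))).
    pose proof (Rmin_l d2 (Rmin d3 d4)). pose proof (Rmin_r d2 (Rmin d3 d4)).
    pose proof (Rmin_l d3 d4). pose proof (Rmin_r d3 d4). lra. }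
  exists cV, theta, cW. split; [unfold cV; lra|]. split.
  { unfold theta. split; [apply Rdiv_lt_0_compat; lra|]. apply (Rmult_lt_reg_r (2 * KK)); [lra|].
    unfold Rdiv. rewrite Rmult_assoc, Rinv_l by lra. lra. }
  split; [lra|].
  destruct (HUeps (cV * delta / (2 * NN))) as [e1 [He1 HU]].
  { apply Rdiv_lt_0_compat; unfold cV; lra. }
  exists (Rmin delta e1). split; [apply Rmin_glb_lt; auto|].
  intros eps [Heps Heps0] Wbar HWbar.
  assert (Hed : eps <= delta) by (pose proof (Rmin_l delta e1); lra).
  assert (HUe : n1 (vsub (Ueps eps) Ubar) <= cV * delta / 2).
  { pose proof (HU eps ltac:(pose proof (Rmin_r delta e1); lra)). pose proof (n1_le_vnorm _ (vsub (Ueps eps) Ubar)).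
    fold NN in H0. assert (NN * vnorm (vsub (Ueps eps) Ubar) <= NN * (cV * delta / (2 * NN))) by (apply Rmult_le_compat_l; lra).
    replace (NN * (cV * delta / (2 * NN))) with (cV * delta / 2) in H1 by (field; lra). lra. }
  assert (Hli : 0 < / lam0 <= 1) by (split; [apply Rinv_0_lt_compat; lra|rewrite <- Rinv_1; apply Rinv_le_contravar; lra]).
  assert (HdS : delta * S <= rho) by (apply div_le; auto; apply Hdd).
  assert (Hd2' : delta * (8 * KK * Lc' * S) <= c) by (apply div_le; [repeat apply Rmult_lt_0_compat; lra|apply Hdd]).
  assert (Hd3' : delta * (16 * NN * KK * Lc') <= c) by (apply div_le; [repeat apply Rmult_lt_0_compat; lra|apply Hdd]).
  assert (Hd4' : delta * (4 * lam0 * KK * Lc' * (2 * S + 4 * KK)) <= c) by (apply div_le; [repeat apply Rmult_lt_0_compat; lra|apply Hdd]).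
  assert (HcW' : cW * (8 * NN * Bp') <= c) by (apply div_le; [unfold Bp'; repeat apply Rmult_lt_0_compat; lra|apply HcW]).
  assert (Hmu : mu delta Lc (NN * delta) (KK * delta) <= 2 * Lc' * S * delta).
  { unfold mu, S, Lc'. replace (NN * delta + KK * delta + 2 * delta) with ((NN + KK + 2) * delta) by ring.
    assert (0 <= (NN + KK + 2) * delta) by nra.
    assert ((1 + delta) * Lc <= 2 * (Lc + 1)) by nra. nra. }
  assert (Hmu0 : 0 <= mu delta Lc (NN * delta) (KK * delta)).
  { unfold mu. apply Rmult_le_pos; [apply Rmult_le_pos; lra|nra]. }
  refine (package (k + m) k Psi Lam Ups Ubar lb c eps (delta / eps) delta (Ueps eps) Wbar rho Lc Bp (NN * delta) (KK * delta)
    Hc Hlb Heps _ Hed _ _ _ HLc HBp _ _ _ _ HLam0 HUps0 (cV * delta) (cW * delta) lam0 _ _ Hlam0 _ _ _ _ cV cW _ _ _ _ _ _).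
  all: try change (INR (k + m)) with NN; try change (INR k) with KK.
  - field. lra.
  - nra.
  - nra.
  - unfold S in HdS. lra.
  - intros i j V W a b V' W' a' b' H1 H2. unfold inreg in H1, H2.
    eapply Rle_trans; [apply LP; lra|]. apply Rmult_le_compat_r; [apply dist4_nonneg|unfold Lc; lra].
  - intros i j V W a b V' W' a' b' H1 H2. unfold inreg in H1, H2.
    eapply Rle_trans; [apply LL; lra|]. apply Rmult_le_compat_r; [apply dist4_nonneg|unfold Lc; lra].
  - intros i j V W a b V' W' a' b' H1 H2. unfold inreg in H1, H2.
    eapply Rle_trans; [apply LU; lra|]. apply Rmult_le_compat_r; [apply dist4_nonneg|unfold Lc; lra].
  - intros i j V W a b H1. unfold inreg in H1.
    assert (H0 : dist4 Ubar (vzero k) 0 0 Ubar (vzero k) 0 0 = 0).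
    { unfold dist4, n1, vsub. rewrite (fsum_ext _ _ (fun _ => 0)) by (intros; rewrite Rminus_diag; apply Rabs_R0).
      rewrite (fsum_ext k _ (fun _ => 0)) by (intros; rewrite Rminus_diag; apply Rabs_R0).
      rewrite !fsum_zero, Rminus_diag, Rabs_R0. ring. }
    pose proof (LP i j Ubar (vzero k) 0 0 V W a b ltac:(lra) ltac:(lra)) as X.
    pose proof (HB0pb i j). pose proof (dist4_nonneg _ _ V W a b Ubar (vzero k) 0 0).
    replace (Psi V W a b i j) with (Psi Ubar (vzero k) 0 0 i j + (Psi V W a b i j - Psi Ubar (vzero k) 0 0 i j)) by ring.
    eapply Rle_trans; [apply Rabs_triang|]. unfold Bp.
    assert (L1 * dist4 V W a b Ubar (vzero k) 0 0 <= Lc * rho).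
    { apply Rmult_le_compat; auto; unfold Lc; lra. }
    lra.
  - unfold cV. split; nra.
  - destruct HcW as [[? ?] _]. split; nra.
  -
    assert (X : NN * (2 * (Bp * (cW * delta)) / c) = (NN * 2 * Bp * cW) * (delta / c)) by (field; lra).
    rewrite X. assert (Y : NN * 2 * Bp * cW <= c / 4).
    { assert (NN * 2 * Bp * cW <= NN * 2 * Bp' * cW) by (unfold Bp'; destruct HcW as [[? ?] _]; nra). lra. }
    assert (0 <= delta / c) by (unfold Rdiv; apply Rmult_le_pos; [lra|left; apply Rinv_0_lt_compat; lra]).
    assert (NN * 2 * Bp * cW * (delta / c) <= c / 4 * (delta / c)) by (apply Rmult_le_compat_r; auto).
    replace (c / 4 * (delta / c)) with (delta / 4) in H0 by (field; lra). unfold cV in *. lra.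
  -
    assert (HW : n1 Wbar <= cW * delta / 2).
    { pose proof (n1_le_vnorm _ Wbar). fold KK in H.
      assert (KK * vnorm Wbar <= KK * (theta * delta)) by (apply Rmult_le_compat_l; lra).
      unfold theta in H0. replace (KK * (cW / (2 * KK) * delta)) with (cW * delta / 2) in H0 by (field; lra). lra. }
    assert (M : KK * 2 * mu delta Lc (NN * delta) (KK * delta) <= c / 2).
    { assert (KK * 2 * mu delta Lc (NN * delta) (KK * delta) <= KK * 2 * (2 * Lc' * S * delta)) by (apply Rmult_le_compat_l; lra).
      lra. }
    destruct HcW as [[? ?] _].
    assert (X : KK * (2 * (mu delta Lc (NN * delta) (KK * delta) * (cW * delta)) / c) = (KK * 2 * mu delta Lc (NN * delta) (KK * delta)) * (cW * delta / c)) by (field; lra).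
    rewrite X. assert (0 <= cW * delta / c) by (unfold Rdiv; apply Rmult_le_pos; [nra|left; apply Rinv_0_lt_compat; lra]).
    assert (KK * 2 * mu delta Lc (NN * delta) (KK * delta) * (cW * delta / c) <= c / 2 * (cW * delta / c)) by (apply Rmult_le_compat_r; auto).
    replace (c / 2 * (cW * delta / c)) with (cW * delta / 2) in H2 by (field; lra). lra.
  -
    unfold kV. assert (Hc8 : 8 * NN * Bp' <= lam0 * c) by (unfold lam0; field_simplify; lra).
    assert (A1 : NN * (2 * (Bp / lam0) / c) <= 1 / 4).
    { replace (NN * (2 * (Bp / lam0) / c)) with ((2 * NN * Bp) * / (lam0 * c)) by (field; lra).
      assert (/ (lam0 * c) <= / (8 * NN * Bp')) by (apply Rinv_le_contravar; [unfold Bp'; repeat apply Rmult_lt_0_compat; lra|lra]).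
      assert ((2 * NN * Bp) * / (lam0 * c) <= (2 * NN * Bp) * / (8 * NN * Bp')) by (apply Rmult_le_compat_l; nra).
      replace ((2 * NN * Bp) * / (8 * NN * Bp')) with (Bp / Bp' / 4) in H0 by (unfold Bp'; field; lra).
      assert (Bp / Bp' <= 1) by (unfold Bp'; replace 1 with ((Bp + 1) / (Bp + 1)) at 2 by (field; lra); unfold Rdiv; apply Rmult_le_compat_r; [left; apply Rinv_0_lt_compat; lra|lra]). lra. }
    assert (A2 : NN * (2 * (Lc * (1 + 1 / lam0) * (KK * delta)) / c) <= 1 / 4).
    { assert (Lc * (1 + 1 / lam0) <= 2 * Lc') by (unfold Lc'; unfold Rdiv; rewrite Rmult_1_l; nra).
      assert (Lc * (1 + 1 / lam0) * (KK * delta) <= 2 * Lc' * (KK * delta)) by (apply Rmult_le_compat_r; nra).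
      assert (NN * (2 * (Lc * (1 + 1 / lam0) * (KK * delta)) / c) <= NN * (2 * (2 * Lc' * (KK * delta)) / c)).
      { apply Rmult_le_compat_l; [lra|]. unfold Rdiv. apply Rmult_le_compat_r; [left; apply Rinv_0_lt_compat; lra|lra]. }
      replace (NN * (2 * (2 * Lc' * (KK * delta)) / c)) with (delta * (16 * NN * KK * Lc') / (4 * c)) in H1 by (field; lra).
      assert (delta * (16 * NN * KK * Lc') / (4 * c) <= c / (4 * c)) by (unfold Rdiv; apply Rmult_le_compat_r; [left; apply Rinv_0_lt_compat; lra|lra]).
      replace (c / (4 * c)) with (1 / 4) in H2 by (field; lra). lra. }
    replace (NN * (2 * (Bp / lam0 + Lc * (1 + 1 / lam0) * (KK * delta)) / c)) with
      (NN * (2 * (Bp / lam0) / c) + NN * (2 * (Lc * (1 + 1 / lam0) * (KK * delta)) / c)) by (field; lra). lra.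
  -
    unfold kW.
    assert (B1 : mu delta Lc (NN * delta) (KK * delta) / lam0 <= 2 * Lc' * S * delta).
    { unfold Rdiv. assert (mu delta Lc (NN * delta) (KK * delta) * / lam0 <= mu delta Lc (NN * delta) (KK * delta)) by nra. lra. }
    assert (B2 : (1 + delta) * Lc * (1 + 1 / lam0) * (KK * delta) <= 4 * Lc' * KK * delta).
    { assert ((1 + delta) * Lc * (1 + 1 / lam0) <= 4 * Lc').
      { unfold Rdiv; rewrite Rmult_1_l. assert ((1 + delta) * Lc <= 2 * Lc') by (unfold Lc'; nra).
        assert (0 <= (1 + delta) * Lc) by nra. nra. }
      assert (0 <= KK * delta) by nra. nra. }
    assert (B3 : KK * (2 * (mu delta Lc (NN * delta) (KK * delta) / lam0 + (1 + delta) * Lc * (1 + 1 / lam0) * (KK * delta)) / c)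
                 <= KK * (2 * (Lc' * delta * (2 * S + 4 * KK)) / c)).
    { apply Rmult_le_compat_l; [lra|]. unfold Rdiv at 2 3. apply Rmult_le_compat_r; [left; apply Rinv_0_lt_compat; lra|]. nra. }
    replace (KK * (2 * (Lc' * delta * (2 * S + 4 * KK)) / c)) with (delta * (4 * lam0 * KK * Lc' * (2 * S + 4 * KK)) / (2 * lam0 * c)) in B3 by (field; lra).
    assert (delta * (4 * lam0 * KK * Lc' * (2 * S + 4 * KK)) / (2 * lam0 * c) <= c / (2 * lam0 * c)).
    { unfold Rdiv. apply Rmult_le_compat_r; [left; apply Rinv_0_lt_compat; nra|lra]. }
    replace (c / (2 * lam0 * c)) with (1 / (2 * lam0)) in H by (field; lra). lra.
  - unfold cV; lra.
  - destruct HcW as [[? ?] _]; lra.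
  - unfold cV. nra.
  - destruct HcW as [[? ?] _]. apply Rmult_le_compat_l; [lra|nra].
  - lra.
  - lra.
Qed.
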